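(* Let $B\subset\mathbb{R}^{n+1}$ be a symmetric convex body and let $x_i\to x$ be a convergent sequence in $S^n$. Assume each section $x_i^\perp\cap B$ is an affine symmetric body of revolution with an axis of revolution $L_i\subset x_i^\perp$, and that $L_i\to L$ in $\mathbb{R}P^n$. Then $x^\perp\cap B$ is an affine symmetric body of revolution with axis of revolution $L$.
   Context: A symmetric convex body is a compact convex set with nonempty interior invariant under $x\mapsto-x$. A symmetric convex body $K\subset\mathbb{R}^m$ is a symmetric body of revolution if it admits an axis of revolution: a 1-dimensional linear subspace $L$ such that every section of $K$ by an affine hyperplane $A$ orthogonal to $L$ is a closed Euclidean $(m-1)$-ball in $A$ centered at $A\cap L$ (possibly empty or a point). An affine symmetric body of revolution (in a linear subspace) is a convex body linearly equivalent to a symmetric body of revolution; the image of an axis under the linear equivalence is called an axis of revolution of it. $\mathbb{R}P^n$ is the space of 1-dimensional linear subspaces of $\mathbb{R}^{n+1}$ with its usual topology. *)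

(* Defs.v *)
(* real Euclidean geometry in R^d.
   A vector of R^d is represented as a function nat -> R whose coordinates
   of index >= d vanish (predicate [Vec d]). *)
From Stdlib Require Import Reals List.
Open Scope R_scope.

Definition vec := nat -> R.

Definition Vec (d : nat) (v : vec) : Prop := forall i, (d <= i)%nat -> v i = 0.

Fixpoint sumR (f : nat -> R) (d : nat) : R :=
  match d with O => 0 | S k => sumR f k + f k end.

Definition vadd (u v : vec) : vec := fun i => u i + v i.
Definition vsub (u v : vec) : vec := fun i => u i - v i.
Definition vopp (u : vec) : vec := fun i => - u i.
Definition scal (t : R) (u : vec) : vec := fun i => t * u i.
Definition vzero : vec := fun _ => 0.

Definition dot (d : nat) (u v : vec) : R := sumR (fun i => u i * v i) d.
Definition norm (d : nat) (v : vec) : R := sqrt (dot d v v).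
Definition dist (d : nat) (u v : vec) : R := norm d (vsub u v).

Definition open_set (d : nat) (U : vec -> Prop) : Prop :=
  forall v, Vec d v -> U v ->
    exists eps, 0 < eps /\ forall w, Vec d w -> dist d w v < eps -> U w.

Definition compact (d : nat) (K : vec -> Prop) : Prop :=
  forall (I : Type) (U : I -> vec -> Prop),
    (forall i, open_set d (U i)) ->
    (forall v, K v -> exists i, U i v) ->
    exists l : list I, forall v, K v -> exists i, In i l /\ U i v.

Definition convex (K : vec -> Prop) : Prop :=
  forall u v t, K u -> K v -> 0 <= t <= 1 ->
    K (vadd (scal t u) (scal (1 - t) v)).

Definition nonempty_interior (d : nat) (K : vec -> Prop) : Prop :=
  exists v eps, Vec d v /\ 0 < eps /\
    forall w, Vec d w -> dist d w v < eps -> K w.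

Definition symmetric (K : vec -> Prop) : Prop := forall v, K v -> K (vopp v).

Definition SymConvexBody (d : nat) (K : vec -> Prop) : Prop :=
  (forall v, K v -> Vec d v) /\ compact d K /\ convex K /\
  nonempty_interior d K /\ symmetric K.

Definition span1 (u : vec) : vec -> Prop := fun v => exists t, v = scal t u.

Definition IsLine (d : nat) (L : vec -> Prop) : Prop :=
  exists u, Vec d u /\ u <> vzero /\ forall v, L v <-> span1 u v.

(* K ⊂ R^m is a symmetric body of revolution with axis of revolution L:
   every affine hyperplane A = {w | <w,u> = t} orthogonal to L (u ∈ L \ {0})
   meets K in the empty set or in a closed Euclidean ball of A centered at
   the point c = A ∩ L (radius 0 allowed, i.e. a point). *)
Definition SymBodyRevolution (m : nat) (K L : vec -> Prop) : Prop :=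
  SymConvexBody m K /\ IsLine m L /\
  forall u t, L u -> u <> vzero ->
    (forall w, ~ (K w /\ dot m w u = t)) \/
    exists c r, L c /\ dot m c u = t /\ 0 <= r /\
      forall w, Vec m w ->
        ((K w /\ dot m w u = t) <-> (dot m w u = t /\ dist m w c <= r)).

Definition LinIsoOnto (m d : nat) (T : vec -> vec) (V : vec -> Prop) : Prop :=
  (forall v, Vec m v -> Vec d (T v)) /\
  (forall a b u v, Vec m u -> Vec m v ->
     T (vadd (scal a u) (scal b v)) = vadd (scal a (T u)) (scal b (T v))) /\
  (forall u v, Vec m u -> Vec m v -> T u = T v -> u = v) /\
  (forall w, V w <-> exists v, Vec m v /\ w = T v).

Definition AffSymBodyRevolution (d : nat) (V K L : vec -> Prop) : Prop :=
  exists (m : nat) (T : vec -> vec) (K' L' : vec -> Prop),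
    LinIsoOnto m d T V /\ SymBodyRevolution m K' L' /\
    (forall w, K w <-> exists v, K' v /\ w = T v) /\
    (forall w, L w <-> exists v, L' v /\ w = T v).

Definition OnSphere (d : nat) (x : vec) : Prop := Vec d x /\ norm d x = 1.

Definition ConvergesTo (d : nat) (xs : nat -> vec) (x : vec) : Prop :=
  forall eps, 0 < eps -> exists N, forall i, (N <= i)%nat -> dist d (xs i) x < eps.

(* convergence in RP^{d-1} (quotient topology of S^{d-1}, a 2-sheeted
   covering): L_i -> L iff there are unit representatives converging *)
Definition RPConverges (d : nat) (Ls : nat -> vec -> Prop) (L : vec -> Prop) : Prop :=
  exists (us : nat -> vec) (u : vec),
    (forall i, OnSphere d (us i) /\ forall v, Ls i v <-> span1 (us i) v) /\
    OnSphere d u /\ (forall v, L v <-> span1 u v) /\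
    ConvergesTo d us u.

Definition perp (d : nat) (x : vec) : vec -> Prop := fun w => Vec d w /\ dot d w x = 0.
Definition section (d : nat) (B : vec -> Prop) (x : vec) : vec -> Prop :=
  fun w => B w /\ dot d w x = 0.

(* Main.v *)
Require Import Defs.
From Stdlib Require Import Reals.
Open Scope R_scope.
From Stdlib Require Import Lra Lia List Classical FunctionalExtensionality Arith IndefiniteDescription ClassicalEpsilon.
Import Defs.
Open Scope R_scope.


Lemma sumR_ext f g d : (forall i, (i < d)%nat -> f i = g i) -> sumR f d = sumR g d.
Proof. induction d; simpl; intros H; auto. rewrite IHd by (intros; apply H; lia). rewrite H by lia. auto. Qed.

Lemma sumR_plus f g d : sumR (fun i => f i + g i) d = sumR f d + sumR g d.
Proof. induction d; simpl; [lra|rewrite IHd; lra]. Qed.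

Lemma sumR_mult c f d : sumR (fun i => c * f i) d = c * sumR f d.
Proof. induction d; simpl; [lra|rewrite IHd; lra]. Qed.

Lemma sumR_opp f d : sumR (fun i => - f i) d = - sumR f d.
Proof. induction d; simpl; [lra|rewrite IHd; lra]. Qed.

Lemma sumR_minus f g d : sumR (fun i => f i - g i) d = sumR f d - sumR g d.
Proof. induction d; simpl; [lra|rewrite IHd; lra]. Qed.

Lemma sumR_zero d : sumR (fun _ => 0) d = 0.
Proof. induction d; simpl; [lra|rewrite IHd; lra]. Qed.

Lemma sumR_nonneg f d : (forall i, (i < d)%nat -> 0 <= f i) -> 0 <= sumR f d.
Proof. induction d; simpl; intros H; [lra|]. assert (0 <= f d) by (apply H; lia).
  assert (0 <= sumR f d) by (apply IHd; intros; apply H; lia). lra. Qed.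

Lemma sumR_le f g d : (forall i, (i < d)%nat -> f i <= g i) -> sumR f d <= sumR g d.
Proof. induction d; simpl; intros H; [lra|]. assert (f d <= g d) by (apply H; lia).
  assert (sumR f d <= sumR g d) by (apply IHd; intros; apply H; lia). lra. Qed.

Lemma sumR_abs f d : Rabs (sumR f d) <= sumR (fun i => Rabs (f i)) d.
Proof. induction d; simpl. rewrite Rabs_R0; lra.
  eapply Rle_trans. apply Rabs_triang. lra. Qed.

Lemma sumR_term_le f d j : (forall i, (i < d)%nat -> 0 <= f i) -> (j < d)%nat -> f j <= sumR f d.
Proof. induction d; intros H Hj; simpl. lia.
  destruct (Nat.eq_dec j d). subst. assert (0 <= sumR f d) by (apply sumR_nonneg; intros; apply H; lia). lra.
  assert (f j <= sumR f d) by (apply IHd; [intros; apply H; lia| lia]). assert (0 <= f d) by (apply H; lia). lra. Qed.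

Lemma sumR_nonneg_zero f d : (forall i, (i < d)%nat -> 0 <= f i) -> sumR f d = 0 ->
  forall i, (i < d)%nat -> f i = 0.
Proof. intros H Hs i Hi. assert (f i <= sumR f d) by (apply sumR_term_le; auto).
  assert (0 <= f i) by auto. lra. Qed.

Lemma sumR_single a j d : (j < d)%nat -> sumR (fun i => if Nat.eqb i j then a else 0) d = a.
Proof. induction d; intros Hj; simpl. lia.
  destruct (Nat.eq_dec j d). subst. rewrite Nat.eqb_refl.
  rewrite (sumR_ext _ (fun _ => 0)). rewrite sumR_zero; lra. intros i Hi. destruct (Nat.eqb_spec i d); [lia|auto].
  destruct (Nat.eqb_spec d j). lia. rewrite IHd by lia. lra. Qed.

Lemma sumR_update f g d j : (j < d)%nat -> (forall i, (i < d)%nat -> i <> j -> g i = f i) ->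
  sumR g d = sumR f d - f j + g j.
Proof. induction d; intros Hj H; simpl. lia.
  destruct (Nat.eq_dec j d). subst. rewrite (sumR_ext g f d). lra. intros; apply H; lia.
  rewrite IHd; [|lia|intros; apply H; lia]. rewrite (H d) by lia. lra. Qed.

Lemma vec_ext (u v : vec) : (forall i, u i = v i) -> u = v.
Proof. intros; apply functional_extensionality; auto. Qed.

Ltac vext := apply vec_ext; intro; unfold vadd, vsub, vopp, scal, vzero.

Lemma Vec_add d u v : Vec d u -> Vec d v -> Vec d (vadd u v).
Proof. unfold Vec, vadd; intros Hu Hv i Hi; rewrite Hu, Hv; auto; lra. Qed.
Lemma Vec_sub d u v : Vec d u -> Vec d v -> Vec d (vsub u v).
Proof. unfold Vec, vsub; intros Hu Hv i Hi; rewrite Hu, Hv; auto; lra. Qed.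
Lemma Vec_scal d t u : Vec d u -> Vec d (scal t u).
Proof. unfold Vec, scal; intros Hu i Hi; rewrite Hu; auto; lra. Qed.
Lemma Vec_opp d u : Vec d u -> Vec d (vopp u).
Proof. unfold Vec, vopp; intros Hu i Hi; rewrite Hu; auto; lra. Qed.
Lemma Vec_zero d : Vec d vzero.
Proof. unfold Vec, vzero; auto. Qed.
#[export] Hint Resolve Vec_add Vec_sub Vec_scal Vec_opp Vec_zero : vec.

Lemma dot_comm d u v : dot d u v = dot d v u.
Proof. unfold dot. apply sumR_ext; intros; ring. Qed.
Lemma dot_add_l d u v w : dot d (vadd u v) w = dot d u w + dot d v w.
Proof. unfold dot, vadd. rewrite <- sumR_plus. apply sumR_ext; intros; ring. Qed.
Lemma dot_add_r d u v w : dot d w (vadd u v) = dot d w u + dot d w v.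
Proof. rewrite dot_comm, dot_add_l, !(dot_comm d w); auto. Qed.
Lemma dot_scal_l d t u w : dot d (scal t u) w = t * dot d u w.
Proof. unfold dot, scal. rewrite <- sumR_mult. apply sumR_ext; intros; ring. Qed.
Lemma dot_scal_r d t u w : dot d w (scal t u) = t * dot d w u.
Proof. rewrite dot_comm, dot_scal_l, (dot_comm d w); auto. Qed.
Lemma dot_sub_l d u v w : dot d (vsub u v) w = dot d u w - dot d v w.
Proof. unfold dot, vsub. rewrite <- sumR_minus. apply sumR_ext; intros; ring. Qed.
Lemma dot_sub_r d u v w : dot d w (vsub u v) = dot d w u - dot d w v.
Proof. rewrite dot_comm, dot_sub_l, !(dot_comm d w); auto. Qed.
Lemma dot_opp_l d u w : dot d (vopp u) w = - dot d u w.
Proof. unfold dot, vopp. rewrite <- sumR_opp. apply sumR_ext; intros; ring. Qed.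
Lemma dot_opp_r d u w : dot d w (vopp u) = - dot d w u.
Proof. rewrite dot_comm, dot_opp_l, (dot_comm d w); auto. Qed.
Lemma dot_zero_l d w : dot d vzero w = 0.
Proof. unfold dot, vzero. transitivity (sumR (fun _ => 0) d). apply sumR_ext; intros; ring. apply sumR_zero. Qed.
Lemma dot_zero_r d w : dot d w vzero = 0.
Proof. rewrite dot_comm; apply dot_zero_l. Qed.
Lemma dot_self_nonneg d u : 0 <= dot d u u.
Proof. unfold dot. apply sumR_nonneg; intros; nra. Qed.

Lemma dot_self_zero d u : Vec d u -> dot d u u = 0 -> u = vzero.
Proof. intros Hu H. apply vec_ext; intro x; unfold vzero. destruct (le_lt_dec d x) as [h|h]. apply Hu; auto.
  assert (u x * u x = 0). apply (sumR_nonneg_zero (fun i => u i * u i) d); auto. intros; nra. nra. Qed.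

Hint Rewrite dot_add_l dot_add_r dot_scal_l dot_scal_r dot_sub_l dot_sub_r dot_opp_l dot_opp_r
  dot_zero_l dot_zero_r : dotE.

Lemma norm_nonneg d u : 0 <= norm d u.
Proof. unfold norm; apply sqrt_pos. Qed.
Lemma norm_sq d u : norm d u * norm d u = dot d u u.
Proof. unfold norm. apply sqrt_sqrt, dot_self_nonneg. Qed.
Lemma norm_of_sq d u a : 0 <= a -> dot d u u = a * a -> norm d u = a.
Proof. intros Ha H. unfold norm. rewrite H. apply sqrt_square; auto. Qed.
Lemma norm_le_sq d u a : 0 <= a -> dot d u u <= a * a -> norm d u <= a.
Proof. intros Ha H. pose proof (norm_sq d u). pose proof (norm_nonneg d u). nra. Qed.
Lemma norm_lt_sq d u a : 0 <= a -> dot d u u < a * a -> norm d u < a.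
Proof. intros Ha H. pose proof (norm_sq d u). pose proof (norm_nonneg d u). nra. Qed.

Lemma cauchy_schwarz d u v : Rabs (dot d u v) <= norm d u * norm d v.
Proof.
  pose proof (norm_sq d u) as Hu. pose proof (norm_sq d v) as Hv.
  pose proof (norm_nonneg d u) as Nu. pose proof (norm_nonneg d v) as Nv.
  assert (Hq : forall t, 0 <= dot d u u - 2 * t * dot d u v + t * t * dot d v v).
  { intro t. pose proof (dot_self_nonneg d (vsub u (scal t v))) as Hs.
    autorewrite with dotE in Hs. rewrite (dot_comm d v u) in Hs. nra. }
  destruct (Req_dec (dot d v v) 0) as [H0|H0].
  - assert (H1 : dot d u v = 0).
    { destruct (Req_dec (dot d u v) 0); auto. exfalso.
      specialize (Hq ((dot d u u + 1) / (2 * dot d u v))). rewrite H0 in Hq.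
      replace (2 * ((dot d u u + 1) / (2 * dot d u v)) * dot d u v) with (dot d u u + 1) in Hq by (field; auto). lra. }
    rewrite H1, Rabs_R0. nra.
  - specialize (Hq (dot d u v / dot d v v)).
    assert (0 < dot d v v) by (pose proof (dot_self_nonneg d v); lra).
    assert (Hk : (dot d u v) * (dot d u v) <= dot d u u * dot d v v).
    { replace (dot d u u - 2 * (dot d u v / dot d v v) * dot d u v + dot d u v / dot d v v * (dot d u v / dot d v v) * dot d v v)
        with ((dot d u u * dot d v v - dot d u v * dot d u v) / dot d v v) in Hq by (field; lra).
      apply Rmult_le_compat_r with (r := dot d v v) in Hq; [|lra].
      unfold Rdiv in Hq. rewrite Rmult_assoc, Rinv_l, Rmult_1_r, Rmult_0_l in Hq; lra. }
    assert (Ha : Rabs (dot d u v) * Rabs (dot d u v) = dot d u v * dot d u v).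
    { rewrite <- Rabs_mult. apply Rabs_right. apply Rle_ge; nra. }
    assert (0 <= norm d u * norm d v) by nra. pose proof (Rabs_pos (dot d u v)).
    rewrite <- Hu, <- Hv in Hk. nra.
Qed.

Lemma dot_le d u v : dot d u v <= norm d u * norm d v.
Proof. pose proof (cauchy_schwarz d u v). pose proof (Rle_abs (dot d u v)). lra. Qed.

Lemma norm_triangle d u v : norm d (vadd u v) <= norm d u + norm d v.
Proof. apply norm_le_sq. pose proof (norm_nonneg d u); pose proof (norm_nonneg d v); lra.
  autorewrite with dotE. rewrite (dot_comm d v u). pose proof (dot_le d u v).
  rewrite <- (norm_sq d u), <- (norm_sq d v). nra. Qed.

Lemma norm_scal d t u : norm d (scal t u) = Rabs t * norm d u.
Proof. apply norm_of_sq. pose proof (norm_nonneg d u); pose proof (Rabs_pos t); nra.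
  autorewrite with dotE. rewrite <- norm_sq.
  assert (Ht: Rabs t * Rabs t = t * t) by (rewrite <- Rabs_mult; apply Rabs_right; apply Rle_ge; nra).
  transitivity ((Rabs t * Rabs t) * (norm d u * norm d u)); [rewrite Ht; ring | ring]. Qed.

Lemma norm_opp d u : norm d (vopp u) = norm d u.
Proof. unfold norm. autorewrite with dotE. f_equal; ring. Qed.

Lemma norm_zero d : norm d vzero = 0.
Proof. unfold norm. rewrite dot_zero_l. apply sqrt_0. Qed.

Lemma norm_zero_inv d u : Vec d u -> norm d u = 0 -> u = vzero.
Proof. intros Hu H. apply (dot_self_zero d); auto. rewrite <- norm_sq, H; ring. Qed.

Lemma norm_sub_triangle d u v w : norm d (vsub u w) <= norm d (vsub u v) + norm d (vsub v w).
Proof. replace (vsub u w) with (vadd (vsub u v) (vsub v w)) by (vext; ring). apply norm_triangle. Qed.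

Lemma norm_sub_sym d u v : norm d (vsub u v) = norm d (vsub v u).
Proof. replace (vsub u v) with (vopp (vsub v u)) by (vext; ring). apply norm_opp. Qed.

Lemma norm_sub_ge d u v : norm d u - norm d v <= norm d (vsub u v).
Proof. pose proof (norm_triangle d (vsub u v) v). replace (vadd (vsub u v) v) with u in H by (vext; ring). lra. Qed.

Lemma norm_add_sub d u v : norm d (vsub u v) <= norm d u + norm d v.
Proof. replace (vsub u v) with (vadd u (vopp v)) by (vext; ring). rewrite <- (norm_opp d v). apply norm_triangle. Qed.

Lemma coord_le_norm d u i : (i < d)%nat -> Rabs (u i) <= norm d u.
Proof. intros Hi. apply Rsqr_incr_0_var. unfold Rsqr. rewrite norm_sq.
  rewrite <- Rabs_mult, Rabs_right by (apply Rle_ge; nra).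
  apply (sumR_term_le (fun i => u i * u i)); auto; intros; nra. apply norm_nonneg. Qed.

Lemma norm_le_sum_abs d u : norm d u <= sumR (fun i => Rabs (u i)) d.
Proof. apply norm_le_sq. apply sumR_nonneg; intros; apply Rabs_pos.
  unfold dot. induction d; simpl. lra.
  assert (0 <= sumR (fun i => Rabs (u i)) d) by (apply sumR_nonneg; intros; apply Rabs_pos).
  pose proof (Rabs_pos (u d)).
  assert (u d * u d = Rabs (u d) * Rabs (u d)) by (rewrite <- Rabs_mult, Rabs_right by (apply Rle_ge; nra); auto).
  nra. Qed.

Lemma dist_eq_norm d u v : dist d u v = norm d (vsub u v).
Proof. reflexivity. Qed.


Definition null (a : nat -> R) : Prop :=
  forall eps, 0 < eps -> exists N, forall k, (N <= k)%nat -> Rabs (a k) < eps.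

Lemma null_le (a b : nat -> R) : null a -> (exists N, forall k, (N <= k)%nat -> Rabs (b k) <= a k) -> null b.
Proof. intros Ha [N0 HN] eps He. destruct (Ha eps He) as [N1 H1]. exists (max N0 N1). intros k Hk.
  specialize (HN k ltac:(lia)). specialize (H1 k ltac:(lia)). pose proof (Rle_abs (a k)). lra. Qed.

Lemma null_plus a b : null a -> null b -> null (fun k => a k + b k).
Proof. intros Ha Hb eps He. destruct (Ha (eps/2) ltac:(lra)) as [N1 H1]. destruct (Hb (eps/2) ltac:(lra)) as [N2 H2].
  exists (max N1 N2). intros k Hk. specialize (H1 k ltac:(lia)). specialize (H2 k ltac:(lia)).
  pose proof (Rabs_triang (a k) (b k)). lra. Qed.

Lemma null_scal c a : null a -> null (fun k => c * a k).
Proof. intros Ha eps He. destruct (Ha (eps / (Rabs c + 1))) as [N H].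
  apply Rdiv_lt_0_compat; [lra| pose proof (Rabs_pos c); lra].
  exists N. intros k Hk. specialize (H k Hk). rewrite Rabs_mult.
  pose proof (Rabs_pos c). pose proof (Rabs_pos (a k)).
  assert (Rabs c * Rabs (a k) <= (Rabs c + 1) * Rabs (a k)) by nra.
  assert ((Rabs c + 1) * Rabs (a k) < (Rabs c + 1) * (eps / (Rabs c + 1))) by (apply Rmult_lt_compat_l; lra).
  replace ((Rabs c + 1) * (eps / (Rabs c + 1))) with eps in H3 by (field; lra). lra. Qed.

Lemma null_opp a : null a -> null (fun k => - a k).
Proof. intros Ha eps He. destruct (Ha eps He) as [N H]. exists N; intros k Hk. rewrite Rabs_Ropp; auto. Qed.

Lemma null_const0 : null (fun _ => 0).
Proof. intros eps He. exists O. intros; rewrite Rabs_R0; lra. Qed.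

Lemma null_sum (a : nat -> nat -> R) m : (forall j, (j < m)%nat -> null (a j)) ->
  null (fun k => sumR (fun j => a j k) m).
Proof. induction m; intros H; simpl. apply null_const0.
  apply null_plus. apply IHm; intros; apply H; lia. apply H; lia. Qed.

Lemma null_mul_bdd a b : null a -> (exists M N, forall k, (N <= k)%nat -> Rabs (b k) <= M) -> null (fun k => a k * b k).
Proof. intros Ha [M [N HM]]. apply null_le with (a := fun k => (Rabs M + 1) * Rabs (a k)).
  - intros eps He. destruct (null_scal (Rabs M + 1) a Ha eps He) as [N1 H1]. exists N1. intros k Hk.
    specialize (H1 k Hk). rewrite Rabs_mult in *. rewrite Rabs_Rabsolu. auto.
  - exists N. intros k Hk. rewrite Rabs_mult. specialize (HM k Hk). pose proof (Rle_abs M).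
    pose proof (Rabs_pos (a k)). pose proof (Rabs_pos (b k)). nra. Qed.

Lemma null_subseq a (phi : nat -> nat) : (forall k, (k <= phi k)%nat) -> null a -> null (fun k => a (phi k)).
Proof. intros Hp Ha eps He. destruct (Ha eps He) as [N H]. exists N. intros k Hk. apply H. specialize (Hp k). lia. Qed.

Lemma null_abs a : null a -> null (fun k => Rabs (a k)).
Proof. intros Ha eps He. destruct (Ha eps He) as [N H]. exists N; intros k Hk. rewrite Rabs_Rabsolu; auto. Qed.

Lemma null_bdd a : null a -> exists M N, forall k, (N <= k)%nat -> Rabs (a k) <= M.
Proof. intros Ha. destruct (Ha 1 ltac:(lra)) as [N H]. exists 1, N. intros k Hk. specialize (H k Hk). lra. Qed.

Lemma null_lim_le a c : null (fun k => a k - c) -> forall b, (exists N, forall k, (N <= k)%nat -> b <= a k) -> b <= c.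
Proof. intros H b [N HN]. destruct (Rle_dec b c); auto. exfalso.
  destruct (H (b - c) ltac:(lra)) as [N1 H1]. specialize (H1 (max N N1) ltac:(lia)). specialize (HN (max N N1) ltac:(lia)).
  pose proof (Rle_abs (a (max N N1) - c)). lra. Qed.

Lemma null_lim_ge a c : null (fun k => a k - c) -> forall b, (exists N, forall k, (N <= k)%nat -> a k <= b) -> c <= b.
Proof. intros H b [N HN]. destruct (Rle_dec c b); auto. exfalso.
  destruct (H (c - b) ltac:(lra)) as [N1 H1]. specialize (H1 (max N N1) ltac:(lia)). specialize (HN (max N N1) ltac:(lia)).
  pose proof (Rle_abs (-(a (max N N1) - c))) as Hq. rewrite Rabs_Ropp in Hq. lra. Qed.

Lemma null_zero_const c : null (fun _ => c) -> c = 0.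
Proof. intros H. destruct (Req_dec c 0); auto. exfalso. destruct (H (Rabs c)) as [N HN].
  apply Rabs_pos_lt; auto. specialize (HN N (le_n N)). lra. Qed.

Lemma conv_null d f v : ConvergesTo d f v <-> null (fun k => norm d (vsub (f k) v)).
Proof. unfold ConvergesTo, null, dist. split; intros H eps He; destruct (H eps He) as [N HN]; exists N; intros k Hk;
  specialize (HN k Hk); rewrite ?Rabs_right in * by (apply Rle_ge, norm_nonneg); auto. Qed.

Definition vsum (f : nat -> vec) (m : nat) : vec := fun l => sumR (fun j => f j l) m.
Definition lincomb (s : nat -> vec) (m : nat) (v : vec) : vec := vsum (fun j => scal (v j) (s j)) m.
Definition basis (j : nat) : vec := fun l => if Nat.eqb l j then 1 else 0.

Lemma vsum_S f m : vsum f (S m) = vadd (vsum f m) (f m).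
Proof. reflexivity. Qed.
Lemma vsum_0 f : vsum f 0 = vzero.
Proof. reflexivity. Qed.

Lemma vsum_ext f g m : (forall j, (j < m)%nat -> f j = g j) -> vsum f m = vsum g m.
Proof. intros H. apply vec_ext; intro l. unfold vsum. apply sumR_ext. intros; rewrite H; auto. Qed.

Lemma Vec_vsum d f m : (forall j, (j < m)%nat -> Vec d (f j)) -> Vec d (vsum f m).
Proof. intros H i Hi. unfold vsum. transitivity (sumR (fun _ => 0) m). apply sumR_ext; intros; apply H; auto.
  apply sumR_zero. Qed.

Lemma norm_vsum d f m : norm d (vsum f m) <= sumR (fun j => norm d (f j)) m.
Proof. induction m. rewrite vsum_0, norm_zero. simpl; lra.
  rewrite vsum_S. simpl. eapply Rle_trans. apply norm_triangle. lra. Qed.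

Lemma dot_vsum_l d f m w : dot d (vsum f m) w = sumR (fun j => dot d (f j) w) m.
Proof. induction m. rewrite vsum_0, dot_zero_l; reflexivity.
  rewrite vsum_S, dot_add_l, IHm. reflexivity. Qed.

Lemma vsum_plus f g m : vsum (fun j => vadd (f j) (g j)) m = vadd (vsum f m) (vsum g m).
Proof. apply vec_ext; intro l. unfold vsum, vadd. apply sumR_plus. Qed.
Lemma vsum_scal c f m : vsum (fun j => scal c (f j)) m = scal c (vsum f m).
Proof. apply vec_ext; intro l. unfold vsum, scal. apply sumR_mult. Qed.
Lemma vsum_sub f g m : vsum (fun j => vsub (f j) (g j)) m = vsub (vsum f m) (vsum g m).
Proof. apply vec_ext; intro l. unfold vsum, vsub. apply sumR_minus. Qed.

Lemma Vec_lincomb d s m v : (forall j, (j < m)%nat -> Vec d (s j)) -> Vec d (lincomb s m v).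
Proof. intros H. apply Vec_vsum. intros. apply Vec_scal; auto. Qed.

Lemma lincomb_lin s m a b u v :
  lincomb s m (vadd (scal a u) (scal b v)) = vadd (scal a (lincomb s m u)) (scal b (lincomb s m v)).
Proof. unfold lincomb. rewrite <- !vsum_scal, <- vsum_plus. apply vsum_ext. intros j _.
  apply vec_ext; intro l; unfold vadd, scal; ring. Qed.

Lemma lincomb_add s m u v : lincomb s m (vadd u v) = vadd (lincomb s m u) (lincomb s m v).
Proof. unfold lincomb. rewrite <- vsum_plus. apply vsum_ext. intros j _. apply vec_ext; intro l; unfold vadd, scal; ring. Qed.
Lemma lincomb_sub s m u v : lincomb s m (vsub u v) = vsub (lincomb s m u) (lincomb s m v).
Proof. unfold lincomb. rewrite <- vsum_sub. apply vsum_ext. intros j _. apply vec_ext; intro l; unfold vsub, scal; ring. Qed.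
Lemma lincomb_scal s m a u : lincomb s m (scal a u) = scal a (lincomb s m u).
Proof. unfold lincomb. rewrite <- vsum_scal. apply vsum_ext. intros j _. apply vec_ext; intro l; unfold scal; ring. Qed.
Lemma lincomb_opp s m u : lincomb s m (vopp u) = vopp (lincomb s m u).
Proof. replace (vopp u) with (scal (-1) u) by (apply vec_ext; intro; unfold vopp, scal; ring).
  rewrite lincomb_scal. apply vec_ext; intro; unfold vopp, scal; ring. Qed.
Lemma lincomb_zero s m : lincomb s m vzero = vzero.
Proof. replace vzero with (scal 0 vzero) by (apply vec_ext; intro; unfold scal, vzero; ring).
  rewrite lincomb_scal. apply vec_ext; intro; unfold scal, vzero; ring. Qed.

Lemma lincomb_norm_le d s m v : norm d (lincomb s m v) <= sumR (fun j => Rabs (v j) * norm d (s j)) m.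
Proof. unfold lincomb. eapply Rle_trans. apply norm_vsum. apply sumR_le. intros; rewrite norm_scal; lra. Qed.

Lemma Vec_basis m j : (j < m)%nat -> Vec m (basis j).
Proof. intros Hj i Hi. unfold basis. destruct (Nat.eqb_spec i j); [lia|auto]. Qed.

Lemma dot_basis m v j : (j < m)%nat -> dot m v (basis j) = v j.
Proof. intros Hj. unfold dot, basis. rewrite <- (sumR_single (v j) j m Hj). apply sumR_ext.
  intros i Hi. destruct (Nat.eqb_spec i j); subst; ring. Qed.

Lemma norm_basis m j : (j < m)%nat -> norm m (basis j) = 1.
Proof. intros Hj. apply norm_of_sq. lra. rewrite dot_basis by auto. unfold basis. rewrite Nat.eqb_refl. ring. Qed.

Lemma vec_expand m v : Vec m v -> v = vsum (fun j => scal (v j) (basis j)) m.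
Proof. intros Hv. apply vec_ext; intro l. unfold vsum, scal, basis.
  destruct (le_lt_dec m l). rewrite Hv by auto. transitivity (sumR (fun _ => 0) m); [|apply sumR_ext; intros; destruct (Nat.eqb_spec l i); [lia|ring]].
  symmetry; apply sumR_zero.
  rewrite <- (sumR_single (v l) l m) by auto. apply sumR_ext. intros i Hi.
  destruct (Nat.eqb_spec l i), (Nat.eqb_spec i l); subst; try lia; ring. Qed.

Definition LinOn (m : nat) (T : vec -> vec) : Prop :=
  forall a b u v, Vec m u -> Vec m v -> T (vadd (scal a u) (scal b v)) = vadd (scal a (T u)) (scal b (T v)).

Lemma LinOn_zero m T : LinOn m T -> T vzero = vzero.
Proof. intros H. specialize (H 0 0 vzero vzero (Vec_zero m) (Vec_zero m)).
  replace (vadd (scal 0 vzero) (scal 0 vzero)) with vzero in H by (apply vec_ext; intro; unfold vadd, scal, vzero; ring).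
  rewrite H. apply vec_ext; intro; unfold vadd, scal, vzero; ring. Qed.

Lemma LinOn_add m T u v : LinOn m T -> Vec m u -> Vec m v -> T (vadd u v) = vadd (T u) (T v).
Proof. intros H Hu Hv. specialize (H 1 1 u v Hu Hv).
  replace (vadd (scal 1 u) (scal 1 v)) with (vadd u v) in H by (apply vec_ext; intro; unfold vadd, scal; ring).
  rewrite H. apply vec_ext; intro; unfold vadd, scal; ring. Qed.

Lemma LinOn_scal m T a u : LinOn m T -> Vec m u -> T (scal a u) = scal a (T u).
Proof. intros H Hu. pose proof (LinOn_zero m T H) as H0. specialize (H a 0 u vzero Hu (Vec_zero m)).
  replace (vadd (scal a u) (scal 0 vzero)) with (scal a u) in H by (apply vec_ext; intro; unfold vadd, scal, vzero; ring).
  rewrite H, H0. apply vec_ext; intro; unfold vadd, scal, vzero; ring. Qed.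

Lemma LinOn_sub m T u v : LinOn m T -> Vec m u -> Vec m v -> T (vsub u v) = vsub (T u) (T v).
Proof. intros H Hu Hv. specialize (H 1 (-1) u v Hu Hv).
  replace (vadd (scal 1 u) (scal (-1) v)) with (vsub u v) in H by (apply vec_ext; intro; unfold vadd, vsub, scal; ring).
  rewrite H. apply vec_ext; intro; unfold vadd, vsub, scal; ring. Qed.

Lemma lin_expand m T v : LinOn m T -> Vec m v -> T v = lincomb (fun j => T (basis j)) m v.
Proof. intros HT Hv. rewrite (vec_expand m v Hv) at 1. unfold lincomb.
  assert (forall k, (k <= m)%nat -> T (vsum (fun j => scal (v j) (basis j)) k) = vsum (fun j => scal (v j) (T (basis j))) k).
  { induction k; intros Hk. rewrite !vsum_0. apply (LinOn_zero m T HT).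
    rewrite !vsum_S. rewrite (LinOn_add m T); auto.
    rewrite IHk by lia. rewrite (LinOn_scal m T) by (auto; apply Vec_basis; lia). auto.
    apply Vec_vsum. intros. apply Vec_scal, Vec_basis; lia. apply Vec_scal, Vec_basis; lia. }
  apply H; auto. Qed.

Lemma lincomb_LinOn s m : LinOn m (lincomb s m).
Proof. intros a b u v _ _. apply lincomb_lin. Qed.


Lemma list_max (l : list nat) : exists M, forall k, In k l -> (k <= M)%nat.
Proof. induction l. exists O; intros k []. destruct IHl as [M HM]. exists (max a M).
  intros k [->|Hk]. lia. specialize (HM k Hk); lia. Qed.

Lemma compact_closed d K y : compact d K -> (forall v, K v -> Vec d v) -> Vec d y ->
  (forall eps, 0 < eps -> exists z, K z /\ norm d (vsub z y) < eps) -> K y.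
Proof.
  intros HK HV Hy Hc. apply NNPP; intro Hn.
  set (U := fun (k : nat) (z : vec) => / (INR k + 1) < norm d (vsub z y)).
  destruct (HK nat U) as [l Hl].
  - intros k v Hv Hu. exists (norm d (vsub v y) - / (INR k + 1)). split. unfold U in Hu; lra.
    intros w Hw Hd. unfold U. unfold dist in Hd. pose proof (norm_sub_triangle d v w y). rewrite norm_sub_sym in Hd. lra.
  - intros v Hv. assert (norm d (vsub v y) > 0).
    { pose proof (norm_nonneg d (vsub v y)). destruct (Req_dec (norm d (vsub v y)) 0); [|lra].
      exfalso. apply Hn. apply norm_zero_inv in H0; [|apply Vec_sub; auto; apply HV; auto].
      assert (Hvy : v = y). { apply vec_ext; intro i. apply (f_equal (fun f => f i)) in H0. unfold vsub, vzero in H0. lra. }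
      rewrite <- Hvy; auto. }
    destruct (archimed_cor1 (norm d (vsub v y)) H) as [N [HN HN0]]. exists N. unfold U.
    eapply Rle_lt_trans; [|apply HN]. apply Rinv_le_contravar. apply lt_0_INR; auto. lra.
  - destruct (list_max l) as [M HM].
    destruct (Hc (/ (INR M + 1))) as [z [Kz Hz]]. apply Rinv_0_lt_compat. pose proof (pos_INR M); lra.
    destruct (Hl z Kz) as [k [Hk Uk]]. unfold U in Uk. specialize (HM k Hk).
    assert (/ (INR M + 1) <= / (INR k + 1)). apply Rinv_le_contravar. pose proof (pos_INR k); lra.
    apply le_INR in HM. lra. lra.
Qed.

Lemma compact_bounded d K : compact d K -> exists R, 0 < R /\ forall z, K z -> norm d z <= R.
Proof.
  intros HK. set (U := fun (k : nat) (z : vec) => norm d z < INR k).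
  destruct (HK nat U) as [l Hl].
  - intros k v Hv Hu. exists (INR k - norm d v). split. unfold U in Hu; lra.
    intros w Hw Hd. unfold U. unfold dist in Hd. pose proof (norm_triangle d (vsub w v) v).
    replace (vadd (vsub w v) v) with w in H by (apply vec_ext; intro; unfold vadd, vsub; ring). lra.
  - intros v Hv. destruct (INR_unbounded (norm d v)) as [N HN]. exists N. unfold U; lra.
  - destruct (list_max l) as [M HM]. exists (INR M + 1). split. pose proof (pos_INR M); lra.
    intros z Kz. destruct (Hl z Kz) as [k [Hk Uk]]. unfold U in Uk. specialize (HM k Hk). apply le_INR in HM. lra.
Qed.

Lemma inner_ball d B : SymConvexBody d B -> exists rho, 0 < rho /\ forall z, Vec d z -> norm d z < rho -> B z.
Proof.
  intros [HV [Hc [Hcv [[p [eps [Hp [He Hb]]]] Hs]]]]. exists eps. split; auto. intros z Hz Hn.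
  assert (B1 : B (vadd p z)). { apply Hb. auto with vec. unfold dist.
    replace (vsub (vadd p z) p) with z by (apply vec_ext; intro; unfold vadd, vsub; ring). auto. }
  assert (B2 : B (vsub p z)). { apply Hb. auto with vec. unfold dist.
    replace (vsub (vsub p z) p) with (vopp z) by (apply vec_ext; intro; unfold vopp, vsub; ring). rewrite norm_opp; auto. }
  apply Hs in B2. specialize (Hcv _ _ (1/2) B1 B2 ltac:(lra)).
  replace z with (vadd (scal (1 / 2) (vadd p z)) (scal (1 - 1 / 2) (vopp (vsub p z)))); auto.
  apply vec_ext; intro; unfold vadd, scal, vopp, vsub; field.
Qed.

Lemma shrink_in d B rho y lam z : SymConvexBody d B -> 0 < rho ->
  (forall z, Vec d z -> norm d z < rho -> B z) -> B y -> 0 <= lam < 1 -> Vec d z ->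
  norm d (vsub z (scal lam y)) < (1 - lam) * rho -> B z.
Proof.
  intros [HV [Hc [Hcv _]]] Hr Hb By Hl Hz Hn.
  set (q := scal (/ (1 - lam)) (vsub z (scal lam y))).
  assert (Bq : B q). { apply Hb. unfold q; auto with vec. unfold q. rewrite norm_scal.
    rewrite Rabs_right by (apply Rle_ge, Rlt_le, Rinv_0_lt_compat; lra).
    apply (Rmult_lt_reg_l (1 - lam)). lra. rewrite <- Rmult_assoc, Rinv_r, Rmult_1_l by lra. auto. }
  specialize (Hcv _ _ lam By Bq ltac:(lra)).
  replace z with (vadd (scal lam y) (scal (1 - lam) q)); auto. unfold q.
  apply vec_ext; intro; unfold vadd, scal, vsub; field; lra.
Qed.


Definition incr (phi : nat -> nat) : Prop := forall k, (phi k < phi (S k))%nat.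

Lemma incr_ge phi : incr phi -> forall k, (k <= phi k)%nat.
Proof. intros H; induction k. lia. specialize (H k). lia. Qed.

Lemma incr_mono phi : incr phi -> forall a b, (a <= b)%nat -> (phi a <= phi b)%nat.
Proof. intros H a b Hab. induction Hab. lia. specialize (H m). lia. Qed.

Lemma incr_comp phi psi : incr phi -> incr psi -> incr (fun k => phi (psi k)).
Proof. intros H1 H2 k. specialize (H2 k). assert (phi (S (psi k)) <= phi (psi (S k)))%nat by (apply incr_mono; auto).
  specialize (H1 (psi k)). lia. Qed.

Lemma bw_subseq (un : nat -> R) M : (forall k, Rabs (un k) <= M) ->
  exists phi L, incr phi /\ null (fun k => un (phi k) - L).
Proof.
  intros HM. destruct (Bolzano_Weierstrass un (fun c => -M <= c <= M) (compact_P3 (-M) M)) as [L HL].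
  { intros k. specialize (HM k). unfold Rabs in HM. destruct (Rcase_abs (un k)); lra. }
  assert (Hc : forall (k N : nat), exists p, (N <= p)%nat /\ Rabs (un p - L) < / (INR k + 1)).
  { intros k N. assert (Hp : 0 < / (INR k + 1)) by (apply Rinv_0_lt_compat; pose proof (pos_INR k); lra).
    assert (Hn : neighbourhood (disc L (mkposreal _ Hp)) L) by (exists (mkposreal _ Hp); intros z Hz; auto).
    destruct (HL _ N Hn) as [p [Hp1 Hp2]]. exists p. split; auto. }
  set (g := fun k N => proj1_sig (constructive_indefinite_description _ (Hc k N))).
  assert (Hg : forall k N, (N <= g k N)%nat /\ Rabs (un (g k N) - L) < / (INR k + 1)).
  { intros k N. unfold g. destruct (constructive_indefinite_description _ (Hc k N)); simpl; auto. }
  set (phi := fix f (k : nat) : nat := match k with O => g O O | S k' => g k (S (f k')) end).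
  exists phi, L. split.
  - intros k. simpl. destruct (Hg (S k) (S (phi k))). lia.
  - intros eps He. destruct (archimed_cor1 eps He) as [K [HK HK0]]. exists K. intros k Hk.
    assert (Rabs (un (phi k) - L) < / (INR k + 1)).
    { destruct k; simpl; apply Hg. }
    eapply Rlt_le_trans; [apply H|]. apply Rlt_le. eapply Rle_lt_trans; [|apply HK].
    apply Rinv_le_contravar. apply lt_0_INR; auto. apply le_INR in Hk. lra.
Qed.

Lemma extract_list {I : Type} (l : list I) (a : I -> nat -> R) M :
  (forall i, In i l -> forall k, Rabs (a i k) <= M) ->
  exists phi, incr phi /\ forall i, In i l -> exists L, null (fun k => a i (phi k) - L).
Proof.
  induction l as [|i0 l IH]; intros HM.
  - exists (fun k => k). split. intros k; lia. intros i [].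
  - destruct IH as [phi [Hphi Hl]]. intros; apply HM; simpl; auto.
    destruct (bw_subseq (fun k => a i0 (phi k)) M) as [psi [L0 [Hpsi H0]]]. intros; apply HM; simpl; auto.
    exists (fun k => phi (psi k)). split. apply incr_comp; auto.
    intros i [<-|Hi]. exists L0; auto.
    destruct (Hl i Hi) as [L HL]. exists L. apply (null_subseq (fun k => a i (phi k) - L) psi); auto.
    apply incr_ge; auto.
Qed.

Definition limR (a : nat -> R) : R :=
  match excluded_middle_informative (exists L, null (fun k => a k - L)) with
  | left H => proj1_sig (constructive_indefinite_description _ H)
  | right _ => 0
  end.

Lemma limR_spec a : (exists L, null (fun k => a k - L)) -> null (fun k => a k - limR a).
Proof. intros H. unfold limR. destruct (excluded_middle_informative _). 
  destruct (constructive_indefinite_description _ e); simpl; auto. contradiction. Qed.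


Definition tau (k m' j : nat) : nat := if Nat.eqb j k then m' else if Nat.eqb j m' then k else j.

Lemma tau_inv k m' j : tau k m' (tau k m' j) = j.
Proof. unfold tau. destruct (Nat.eqb_spec j k) as [h1|h1].
  - destruct (Nat.eqb_spec m' k); [lia|]. rewrite Nat.eqb_refl. lia.
  - destruct (Nat.eqb_spec j m') as [h2|h2].
    + rewrite Nat.eqb_refl. lia.
    + destruct (Nat.eqb_spec j k); [lia|]. destruct (Nat.eqb_spec j m'); lia. Qed.

Lemma tau_lt k m' j : (k <= m')%nat -> (j < S m')%nat -> (tau k m' j < S m')%nat.
Proof. intros. unfold tau. destruct (Nat.eqb_spec j k); destruct (Nat.eqb_spec j m'); lia. Qed.

Lemma sumR_tau f k m' : (k <= m')%nat -> sumR (fun j => f (tau k m' j)) (S m') = sumR f (S m').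
Proof. intros Hk. destruct (Nat.eq_dec k m').
  - subst. apply sumR_ext. intros j Hj. unfold tau. destruct (Nat.eqb_spec j m'); subst; auto.
  - simpl. unfold tau at 2. rewrite Nat.eqb_refl. destruct (Nat.eqb_spec m' k); [lia|].
    rewrite (sumR_update f (fun j => f (tau k m' j)) m' k) by (try lia; intros i Hi Hik; unfold tau;
      destruct (Nat.eqb_spec i k); destruct (Nat.eqb_spec i m'); try lia; auto).
    unfold tau. rewrite Nat.eqb_refl. lra. Qed.

Lemma vsum_tau f k m' : (k <= m')%nat -> vsum (fun j => f (tau k m' j)) (S m') = vsum f (S m').
Proof. intros Hk. apply vec_ext; intro l. unfold vsum. apply (sumR_tau (fun j => f j l)); auto. Qed.

Lemma Vec0_zero v : Vec 0 v -> v = vzero.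
Proof. intros H. apply vec_ext; intro i; apply H; lia. Qed.

Lemma dependent d : forall m (w : nat -> vec), (d < m)%nat -> (forall j, (j < m)%nat -> Vec d (w j)) ->
  exists c : nat -> R, (exists j, (j < m)%nat /\ c j <> 0) /\ vsum (fun j => scal (c j) (w j)) m = vzero.
Proof.
  induction d as [|d IH]; intros m w Hm Hw.
  - exists (fun j => if Nat.eqb j 0 then 1 else 0). split. exists O. split. lia. simpl. lra.
    apply Vec0_zero. apply Vec_vsum. intros. apply Vec_scal; auto.
  - destruct (classic (forall j, (j < m)%nat -> w j d = 0)) as [Hz|Hnz].
    + apply IH. lia. intros j Hj i Hi. destruct (Nat.eq_dec i d). subst; auto. apply Hw; auto; lia.
    + apply not_all_ex_not in Hnz. destruct Hnz as [k Hk].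
      assert (Hkm : (k < m)%nat) by (apply NNPP; intro; apply Hk; intro; lia).
      assert (Hkd : w k d <> 0) by (intro; apply Hk; auto).
      destruct m as [|m']. lia.
      set (wt := fun j => w (tau k m' j)).
      assert (Hwt : wt m' = w k). { unfold wt, tau. rewrite Nat.eqb_refl. destruct (Nat.eqb_spec m' k); subst; auto. }
      set (w' := fun j => vsub (wt j) (scal (wt j d / wt m' d) (wt m'))).
      destruct (IH m' w') as [c' [[j0 [Hj0 Hc0]] Hsum]]. lia.
      { intros j Hj i Hi. unfold w', vsub, scal. destruct (Nat.eq_dec i d).
        - subst. rewrite Hwt. field. auto.
        - assert (E1 : wt j i = 0) by (unfold wt; apply Hw; [apply tau_lt; lia| lia]).
          rewrite E1, Hwt, (Hw k Hkm i) by lia. ring. }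
      set (ct := fun j => if Nat.ltb j m' then c' j else - sumR (fun i => c' i * (wt i d / wt m' d)) m').
      exists (fun j => ct (tau k m' j)). split.
      * exists (tau k m' j0). split. apply tau_lt; lia. rewrite tau_inv. unfold ct.
        destruct (Nat.ltb_spec j0 m'); [auto|lia].
      * assert (E : vsum (fun j => scal (ct (tau k m' j)) (w j)) (S m') =
                    vsum (fun j => scal (ct (tau k m' j)) (wt (tau k m' j))) (S m')).
        { apply vsum_ext. intros j _. unfold wt. rewrite tau_inv. auto. }
        rewrite E. rewrite (vsum_tau (fun j => scal (ct j) (wt j))) by lia.
        rewrite vsum_S. rewrite <- Hsum. apply vec_ext; intro l. unfold vsum, vadd, scal, w', vsub.
        unfold ct. destruct (Nat.ltb_spec m' m'); [lia|].
        rewrite (sumR_ext _ (fun j => c' j * wt j l)) by (intros j Hj; destruct (Nat.ltb_spec j m'); [auto|lia]).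
        rewrite (sumR_ext (fun j => c' j * (wt j l - wt j d / wt m' d * wt m' l))
                  (fun j => c' j * wt j l - (c' j * (wt j d / wt m' d)) * wt m' l)) by (intros; ring).
        rewrite sumR_minus. rewrite (sumR_ext (fun j => c' j * (wt j d / wt m' d) * wt m' l)
                  (fun j => wt m' l * (c' j * (wt j d / wt m' d)))) by (intros; ring).
        rewrite sumR_mult. ring.
Qed.

Lemma dim_le m d T : LinOn m T -> (forall v, Vec m v -> Vec d (T v)) ->
  (forall u v, Vec m u -> Vec m v -> T u = T v -> u = v) -> (m <= d)%nat.
Proof.
  intros HL HV HI. destruct (le_lt_dec m d) as [h|h]; auto. exfalso.
  destruct (dependent d m (fun j => T (basis j)) h) as [c [[j [Hj Hc]] Hs]].
  intros; apply HV, Vec_basis; auto.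
  set (v := vsum (fun j => scal (c j) (basis j)) m).
  assert (Hv : Vec m v) by (apply Vec_vsum; intros; apply Vec_scal, Vec_basis; auto).
  assert (Hcv : forall i, (i < m)%nat -> v i = c i).
  { intros i Hi. unfold v, vsum, scal, basis. rewrite <- (sumR_single (c i) i m Hi). apply sumR_ext.
    intros l Hl. destruct (Nat.eqb_spec i l), (Nat.eqb_spec l i); subst; try lia; ring. }
  assert (T v = T vzero).
  { rewrite (LinOn_zero m T HL). rewrite (lin_expand m T v HL Hv). rewrite <- Hs. unfold lincomb.
    apply vsum_ext. intros i Hi. rewrite Hcv; auto. }
  apply HI in H; auto with vec. apply Hc. rewrite <- Hcv by auto. rewrite H. reflexivity.
Qed.


Definition radial (m : nat) (u v : vec) : vec := vsub v (scal (dot m v u) u).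

Lemma radial_perp m u v : dot m u u = 1 -> dot m (radial m u v) u = 0.
Proof. intros H. unfold radial. autorewrite with dotE. rewrite H. ring. Qed.

Lemma radial_sq m u v : dot m u u = 1 -> dot m (radial m u v) (radial m u v) = dot m v v - dot m v u * dot m v u.
Proof. intros H. unfold radial. autorewrite with dotE. rewrite (dot_comm m u v), H. ring. Qed.

Lemma radial_decomp m u v : v = vadd (scal (dot m v u) u) (radial m u v).
Proof. unfold radial. apply vec_ext; intro; unfold vadd, vsub, scal; ring. Qed.

Lemma Vec_radial m u v : Vec m u -> Vec m v -> Vec m (radial m u v).
Proof. intros; unfold radial; auto with vec. Qed.

Lemma unit_dot m u : norm m u = 1 -> dot m u u = 1.
Proof. intros H. rewrite <- norm_sq, H. ring. Qed.

Lemma abs_dot_unit_le m u v : norm m u = 1 -> Rabs (dot m v u) <= norm m v.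
Proof. intros H. pose proof (cauchy_schwarz m v u). rewrite H in H0. lra. Qed.

Lemma norm_radial_le m u v : norm m u = 1 -> norm m (radial m u v) <= norm m v.
Proof. intros H. apply norm_le_sq. apply norm_nonneg. rewrite radial_sq by (apply unit_dot; auto).
  rewrite <- norm_sq. nra. Qed.

Lemma norm_radial_eq m u v w : norm m u = 1 -> dot m w u = dot m v u -> norm m w = norm m v ->
  norm m (radial m u w) = norm m (radial m u v).
Proof. intros H1 H2 H3. unfold norm at 1 2. f_equal. rewrite !radial_sq by (apply unit_dot; auto).
  rewrite <- (norm_sq m w), <- (norm_sq m v), H3, H2. ring. Qed.

Lemma norm_le_dot_radial m u v : norm m u = 1 -> norm m v <= Rabs (dot m v u) + norm m (radial m u v).
Proof. intros H. apply norm_le_sq. pose proof (Rabs_pos (dot m v u)); pose proof (norm_nonneg m (radial m u v)); lra.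
  pose proof (norm_sq m (radial m u v)). rewrite radial_sq in H0 by (apply unit_dot; auto).
  assert (Rabs (dot m v u) * Rabs (dot m v u) = dot m v u * dot m v u) by (rewrite <- Rabs_mult; apply Rabs_right; apply Rle_ge; nra).
  pose proof (Rabs_pos (dot m v u)); pose proof (norm_nonneg m (radial m u v)). nra. Qed.

Lemma norm_pos_of_nonzero m v : Vec m v -> v <> vzero -> 0 < norm m v.
Proof. intros Hv Hn. pose proof (norm_nonneg m v). destruct (Req_dec (norm m v) 0); [|lra].
  exfalso; apply Hn; apply (norm_zero_inv m); auto. Qed.

Lemma norm_normalize m v : Vec m v -> v <> vzero -> norm m (scal (/ norm m v) v) = 1.
Proof. intros Hv Hn. pose proof (norm_pos_of_nonzero m v Hv Hn). rewrite norm_scal.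
  rewrite Rabs_right by (apply Rle_ge, Rlt_le, Rinv_0_lt_compat; auto). field. lra. Qed.


Definition M0c (rho RB : R) := (rho + RB) / 2 + (rho + (rho + RB) / 2) / rho.
Definition cst (rho RB : R) := rho / (M0c rho RB + 1).

Lemma M0c_pos rho RB : 0 < rho -> 0 < RB -> 0 < M0c rho RB.
Proof. intros. unfold M0c. assert (0 < (rho + (rho + RB) / 2) / rho) by (apply Rdiv_lt_0_compat; lra). lra. Qed.

Lemma cst_pos rho RB : 0 < rho -> 0 < RB -> 0 < cst rho RB.
Proof. intros. unfold cst. pose proof (M0c_pos rho RB H H0). apply Rdiv_lt_0_compat; lra. Qed.

Lemma rev_level m K' L' u' : SymBodyRevolution m K' L' -> Vec m u' -> norm m u' = 1 -> L' u' ->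
  (forall c, L' c -> c = scal (dot m c u') u') ->
  forall v w, Vec m w -> K' v -> dot m w u' = dot m v u' ->
  norm m (radial m u' w) <= norm m (radial m u' v) -> K' w.
Proof.
  intros [HK' [_ Hrev]] Hu'V Hu'1 HLu' Hcen v w HwV Kv Hd Hn.
  assert (Hnz : u' <> vzero). { intro E. rewrite E, norm_zero in Hu'1. lra. }
  destruct (Hrev u' (dot m v u') HLu' Hnz) as [Hno|[c [r [Lc [Hcu [Hr0 Hball]]]]]].
  - exfalso. apply (Hno v). auto.
  - assert (Ec : c = scal (dot m v u') u') by (rewrite (Hcen c Lc), Hcu; auto).
    destruct HK' as [HKV _].
    apply (proj2 (Hball w HwV)). split; auto. unfold dist. rewrite Ec, <- Hd. fold (radial m u' w).
    assert (dist m v c <= r) by (apply (proj1 (Hball v (HKV v Kv))); auto).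
    unfold dist in H. rewrite Ec in H. fold (radial m u' v) in H. lra.
Qed.

Lemma rev_level0 m K' L' u' : SymBodyRevolution m K' L' -> Vec m u' -> norm m u' = 1 -> L' u' ->
  (forall c, L' c -> c = scal (dot m c u') u') ->
  exists r0, 0 <= r0 /\ forall z, Vec m z -> dot m z u' = 0 -> (K' z <-> norm m z <= r0).
Proof.
  intros [HK' [HL Hrev]] Hu'V Hu'1 HLu' Hcen.
  assert (Hnz : u' <> vzero). { intro E. rewrite E, norm_zero in Hu'1. lra. }
  assert (K0 : K' vzero). { destruct (inner_ball m K' HK') as [r [Hr Hb]]. apply Hb. apply Vec_zero. rewrite norm_zero; auto. }
  destruct (Hrev u' 0 HLu' Hnz) as [Hno|[c [r [Lc [Hcu [Hr0 Hball]]]]]].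
  - exfalso. apply (Hno vzero). split; auto. apply dot_zero_l.
  - exists r. split; auto. assert (Ec : c = vzero).
    { rewrite (Hcen c Lc), Hcu. apply vec_ext; intro; unfold scal, vzero; ring. }
    intros z Hz Hzu. specialize (Hball z Hz). unfold dist in Hball. rewrite Ec in Hball.
    replace (vsub z vzero) with z in Hball by (apply vec_ext; intro; unfold vsub, vzero; ring). tauto.
Qed.


Lemma Rdiv_le_0_compat a b : 0 <= a -> 0 < b -> 0 <= a / b.
Proof. intros. apply Rle_mult_inv_pos; auto. Qed.

Lemma normalize d B xi Li ui rho RB :
  SymConvexBody d B -> 0 < rho -> 0 < RB -> (forall z, Vec d z -> norm d z < rho -> B z) ->
  (forall z, B z -> norm d z <= RB) ->
  OnSphere d ui -> (forall v, Li v <-> span1 ui v) ->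
  AffSymBodyRevolution d (perp d xi) (section d B xi) Li ->
  exists m s u', (m <= d)%nat /\ (forall j, (j < m)%nat -> Vec d (s j)) /\ Vec m u' /\ norm m u' = 1 /\
   lincomb s m u' = ui /\
   (forall v, Vec m v -> dot d (lincomb s m v) xi = 0) /\
   (forall w, Vec d w -> dot d w xi = 0 -> exists v, Vec m v /\ w = lincomb s m v) /\
   (forall v, Vec m v -> norm d (lincomb s m v) <= (1 + RB) * norm m v) /\
   (forall v, Vec m v -> cst rho RB * norm m v <= norm d (lincomb s m v)) /\
   (forall v w, Vec m v -> Vec m w -> B (lincomb s m v) -> dot m w u' = dot m v u' ->
      norm m w = norm m v -> B (lincomb s m w)).
Proof.
  intros HB Hr HRB Hin Hbd [HuiV Hui1] HLi
    [m [T [K' [L' [[TV [TL [TI TIm]]] [HSBR [HK HL]]]]]]].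
  assert (TL' : LinOn m T) by exact TL.
  pose proof HSBR as [HK' [[u0 [Hu0V [Hu0nz HL'u0]]] Hrev]].
  assert (HK'V : forall v, K' v -> Vec m v) by (destruct HK'; auto).
  set (n0 := norm m u0).
  assert (Hn0 : 0 < n0) by (apply norm_pos_of_nonzero; auto).
  set (u' := scal (/ n0) u0).
  assert (Hu'V : Vec m u') by (unfold u'; auto with vec).
  assert (Hu'1 : norm m u' = 1) by (apply norm_normalize; auto).
  assert (Hu'd : dot m u' u' = 1) by (apply unit_dot; auto).
  assert (Hu'nz : u' <> vzero) by (intro E; rewrite E, norm_zero in Hu'1; lra).
  assert (HLu' : L' u') by (apply HL'u0; exists (/ n0); auto).
  assert (Hcen : forall c, L' c -> c = scal (dot m c u') u').
  { intros c Lc. apply HL'u0 in Lc. destruct Lc as [t ->]. unfold u'. autorewrite with dotE.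
    rewrite <- (norm_sq m u0). fold n0. apply vec_ext; intro; unfold scal; field; lra. }
  pose proof (rev_level m K' L' u' HSBR Hu'V Hu'1 HLu' Hcen) as Hlev.
  destruct (rev_level0 m K' L' u' HSBR Hu'V Hu'1 HLu' Hcen) as [r0 [Hr0 Hball0]].
  destruct (inner_ball m K' HK') as [rho' [Hrho' Hin']].
  assert (Hr0pos : forall z, Vec m z -> dot m z u' = 0 -> z <> vzero -> 0 < r0).
  { intros z Hz Hzu Hnz. pose proof (norm_pos_of_nonzero m z Hz Hnz).
    set (z' := scal (rho' / 2 / norm m z) z).
    assert (Hz'n : norm m z' = rho' / 2).
    { unfold z'. rewrite norm_scal. rewrite Rabs_right by (apply Rle_ge; apply Rlt_le; apply Rdiv_lt_0_compat; lra). field; lra. }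
    assert (K' z') by (apply Hin'; [unfold z'; auto with vec| lra]).
    apply (Hball0 z') in H0; [lra| unfold z'; auto with vec| unfold z'; autorewrite with dotE; rewrite Hzu; ring]. }
  assert (HTu' : exists al, T u' = scal al ui).
  { assert (Li (T u')) by (apply HL; exists u'; auto). apply HLi in H. destruct H as [al Hal]. exists al; auto. }
  destruct HTu' as [al Hal].
  assert (T0 : T vzero = vzero) by (apply (LinOn_zero m T TL')).
  assert (Hal0 : al <> 0).
  { intro E. apply Hu'nz. apply TI; auto with vec. rewrite Hal, T0, E. apply vec_ext; intro; unfold scal, vzero; ring. }
  set (r' := if Rlt_dec 0 r0 then r0 else 1).
  assert (Hr'pos : 0 < r') by (unfold r'; destruct (Rlt_dec 0 r0); lra).
  assert (Hr'eq : forall z, Vec m z -> dot m z u' = 0 -> z <> vzero -> r' = r0).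
  { intros z Hz Hzu Hnz. pose proof (Hr0pos z Hz Hzu Hnz). unfold r'. destruct (Rlt_dec 0 r0); lra. }
  set (D := fun v => vadd (scal (dot m v u' / al) u') (scal r' (radial m u' v))).
  assert (HDV : forall v, Vec m v -> Vec m (D v)) by (intros; unfold D; auto using Vec_radial with vec).
  assert (HDL : LinOn m D).
  { intros a b u v Hu Hv. unfold D, radial. autorewrite with dotE. apply vec_ext; intro; unfold vadd, vsub, scal; field; auto. }
  assert (HDu : forall v, dot m (D v) u' = dot m v u' / al).
  { intros v. unfold D. rewrite dot_add_l, !dot_scal_l, radial_perp, Hu'd by auto. ring. }
  assert (HDr : forall v, radial m u' (D v) = scal r' (radial m u' v)).
  { intros v. unfold radial at 1. rewrite HDu. unfold D. apply vec_ext; intro; unfold vadd, vsub, scal; field; auto. }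
  set (S := fun v => T (D v)).
  assert (HSV : forall v, Vec m v -> Vec d (S v)) by (intros; unfold S; auto).
  assert (HSL : LinOn m S).
  { intros a b u v Hu Hv. unfold S. rewrite HDL by auto. apply TL; auto. }
  set (s := fun j => S (basis j)).
  assert (HS : forall v, Vec m v -> lincomb s m v = S v) by (intros; symmetry; apply lin_expand; auto).
  assert (Hsec : forall v, Vec m v -> section d B xi (S v) -> K' (D v)).
  { intros v Hv Hs. apply HK in Hs. destruct Hs as [v0 [K0 E]]. unfold S in E. apply TI in E; auto.
    rewrite E; auto. }
  assert (Hperp : forall v, Vec m v -> dot d (S v) xi = 0).
  { intros v Hv. assert (perp d xi (S v)) by (apply TIm; exists (D v); auto). destruct H; auto. }
  assert (HSu' : S u' = ui).
  { unfold S. replace (D u') with (scal (/ al) u').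
    rewrite (LinOn_scal m T) by auto. rewrite Hal. apply vec_ext; intro; unfold scal; field; auto.
    unfold D, radial. rewrite Hu'd. apply vec_ext; intro; unfold vadd, vsub, scal; field; auto. }
  assert (HP : forall v w, Vec m v -> Vec m w -> B (S v) -> dot m w u' = dot m v u' -> norm m w = norm m v -> B (S w)).
  { intros v w Hv Hw Bv Hd Hn. assert (K' (D v)) by (apply Hsec; auto; split; auto).
    assert (K' (D w)).
    { apply (Hlev (D v)); auto. rewrite !HDu, Hd; auto. rewrite !HDr, !norm_scal.
      rewrite (norm_radial_eq m u' v w) by auto. lra. }
    assert (section d B xi (T (D w))) by (apply HK; exists (D w); auto). destruct H1; auto. }
  assert (Hup0 : forall z, Vec m z -> dot m z u' = 0 -> norm d (S z) <= RB * norm m z).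
  { intros z Hz Hzu. destruct (classic (z = vzero)) as [->|Hnz].
    - unfold S. replace (D vzero) with vzero by (symmetry; apply (LinOn_zero m D HDL)). rewrite T0, !norm_zero. lra.
    - pose proof (norm_pos_of_nonzero m z Hz Hnz).
      set (z1 := scal (/ norm m z) z).
      assert (Hz1 : norm m z1 = 1) by (apply norm_normalize; auto).
      assert (Hz1u : dot m z1 u' = 0) by (unfold z1; rewrite dot_scal_l, Hzu; ring).
      assert (HDz1 : D z1 = scal r0 z1).
      { unfold D, radial. rewrite Hz1u. rewrite <- (Hr'eq z Hz Hzu Hnz). apply vec_ext; intro; unfold vadd, vsub, scal; field; auto. }
      assert (K' (scal r0 z1)). { apply Hball0. auto with vec. unfold z1; auto with vec. rewrite dot_scal_l, Hz1u; ring.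
        rewrite norm_scal, Hz1, Rabs_right; lra. }
      assert (B (S z1)). { assert (section d B xi (T (scal r0 z1))) by (apply HK; exists (scal r0 z1); auto).
        unfold S. rewrite HDz1. destruct H1; auto. }
      apply Hbd in H1. replace z with (scal (norm m z) z1) by (unfold z1; apply vec_ext; intro; unfold scal; field; lra).
      rewrite (LinOn_scal m S) by (unfold z1; auto with vec). rewrite norm_scal, Rabs_right by lra.
      rewrite norm_scal, Rabs_right, Hz1 by lra. nra. }
  assert (Hlo0 : forall z, Vec m z -> dot m z u' = 0 -> rho * norm m z <= norm d (S z)).
  { intros z Hz Hzu. destruct (classic (z = vzero)) as [->|Hnz].
    - rewrite norm_zero. pose proof (norm_nonneg d (S vzero)). lra.
    - pose proof (norm_pos_of_nonzero m z Hz Hnz) as Hzp. destruct (Rle_dec (rho * norm m z) (norm d (S z))) as [h|h]; auto.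
      exfalso. apply Rnot_le_lt in h. pose proof (norm_nonneg d (S z)) as HSz.
      set (q := norm d (S z) / rho).
      assert (Hq0 : 0 <= q) by (unfold q; apply Rdiv_le_0_compat; lra).
      assert (Hq1 : q < norm m z) by (unfold q; apply Rmult_lt_reg_r with rho; [lra| unfold Rdiv; rewrite Rmult_assoc, Rinv_l, Rmult_1_r; lra]).
      assert (HSq : norm d (S z) = q * rho) by (unfold q; field; lra).
      set (be := 2 / (norm m z + q)).
      assert (Hbe : 0 < be) by (unfold be; apply Rdiv_lt_0_compat; lra).
      assert (H1 : be * norm m z > 1).
      { unfold be. apply Rmult_lt_reg_r with (norm m z + q). lra.
        replace (2 / (norm m z + q) * norm m z * (norm m z + q)) with (2 * norm m z) by (field; lra). lra. }
      assert (H2 : be * norm d (S z) < rho).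
      { rewrite HSq. replace (be * (q * rho)) with ((2 * q / (norm m z + q)) * rho) by (unfold be; field; lra).
        assert (2 * q / (norm m z + q) < 1).
        { apply Rmult_lt_reg_r with (norm m z + q). lra.
          replace (2 * q / (norm m z + q) * (norm m z + q)) with (2 * q) by (field; lra). lra. }
        nra. }
      assert (B (S (scal be z))).
      { apply Hin. auto with vec. rewrite (LinOn_scal m S), norm_scal, Rabs_right by (auto; lra). auto. }
      assert (H3 : K' (D (scal be z))) by (apply Hsec; auto with vec; split; auto; apply Hperp; auto with vec).
      assert (HDz : D (scal be z) = scal (r' * be) z).
      { unfold D, radial. rewrite dot_scal_l, Hzu. apply vec_ext; intro; unfold vadd, vsub, scal; field; auto. }
      rewrite HDz in H3. apply Hball0 in H3; [| auto with vec | rewrite dot_scal_l, Hzu; ring].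
      rewrite norm_scal, Rabs_right in H3 by nra. rewrite (Hr'eq z Hz Hzu Hnz) in H3.
      pose proof (Hr0pos z Hz Hzu Hnz). nra. }
  exists m, s, u'. split; [|split; [|split; [|split; [|split; [|split; [|split; [|split; [|split]]]]]]]].
  - apply (dim_le m d T); auto.
  - intros j Hj. unfold s. apply HSV, Vec_basis; auto.
  - auto.
  - auto.
  - rewrite HS; auto.
  - intros v Hv. rewrite HS; auto.
  - intros w Hw Hwx. assert (perp d xi w) by (split; auto). apply TIm in H. destruct H as [v0 [Hv0 ->]].
    set (v := vadd (scal (al * dot m v0 u') u') (scal (/ r') (radial m u' v0))).
    assert (Hv : Vec m v) by (unfold v; auto using Vec_radial with vec).
    exists v. split; auto. rewrite HS by auto. unfold S. f_equal.
    assert (Hvu : dot m v u' = al * dot m v0 u') by (unfold v; rewrite dot_add_l, !dot_scal_l, radial_perp, Hu'd by auto; ring).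
    unfold D. rewrite Hvu. unfold radial. rewrite Hvu. unfold v, radial.
    apply vec_ext; intro; unfold vadd, vsub, scal; field; lra.
  - intros v Hv. rewrite HS by auto. rewrite (radial_decomp m u' v) at 1.
    rewrite (LinOn_add m S) by (auto using Vec_radial with vec). rewrite (LinOn_scal m S), HSu' by auto.
    eapply Rle_trans. apply norm_triangle. rewrite norm_scal, Hui1.
    pose proof (Hup0 (radial m u' v) (Vec_radial m u' v Hu'V Hv) (radial_perp m u' v Hu'd)).
    pose proof (abs_dot_unit_le m u' v Hu'1). pose proof (norm_radial_le m u' v Hu'1).
    pose proof (norm_nonneg m v). nra.
  - intros v Hv. rewrite HS by auto. pose proof (cst_pos rho RB Hr HRB) as Hc.
    destruct (Rle_dec (cst rho RB * norm m v) (norm d (S v))) as [h|h]; auto. exfalso. apply Rnot_le_lt in h.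
    pose proof (norm_nonneg d (S v)).
    assert (Hvnz : 0 < norm m v) by (pose proof (norm_nonneg m v); destruct (Req_dec (norm m v) 0) as [E|E]; [rewrite E in h; lra| lra]).
    pose proof (M0c_pos rho RB Hr HRB) as HM0.
    set (v' := scal ((M0c rho RB + 1) / norm m v) v).
    assert (Hv' : Vec m v') by (unfold v'; auto with vec).
    assert (Hv'n : norm m v' = M0c rho RB + 1).
    { unfold v'. rewrite norm_scal, Rabs_right by (apply Rle_ge, Rlt_le, Rdiv_lt_0_compat; lra). field; lra. }
    assert (HSv' : norm d (S v') < rho).
    { unfold v'. rewrite (LinOn_scal m S), norm_scal, Rabs_right by (auto; apply Rle_ge, Rlt_le, Rdiv_lt_0_compat; lra).
      unfold cst in h. apply (Rmult_lt_compat_l ((M0c rho RB + 1) / norm m v)) in h; [|apply Rdiv_lt_0_compat; lra].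
      replace ((M0c rho RB + 1) / norm m v * (rho / (M0c rho RB + 1) * norm m v)) with rho in h by (field; lra). lra. }
    assert (Bv' : B (S v')) by (apply Hin; auto).
    set (a := dot m v' u'). set (z := radial m u' v').
    assert (Hz : Vec m z) by (unfold z; apply Vec_radial; auto).
    assert (Hzu : dot m z u' = 0) by (unfold z; apply radial_perp; auto).
    set (vs := vsub (scal a u') z).
    assert (Hvs : Vec m vs) by (unfold vs; auto with vec).
    assert (Hvsu : dot m vs u' = a) by (unfold vs; rewrite dot_sub_l, dot_scal_l, Hu'd, Hzu; ring).
    assert (Hvsn : norm m vs = norm m v').
    { assert (Ezz: dot m z z = dot m v' v' - a*a) by (unfold z, a; apply radial_sq; auto).
      unfold norm. f_equal. unfold vs. autorewrite with dotE. rewrite ?(dot_comm m u' z), Hzu, Hu'd, Ezz. ring. }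
    assert (Bvs : B (S vs)) by (apply (HP v'); auto).
    apply Hbd in Bvs.
    assert (Hsum : vadd (S v') (S vs) = scal (2 * a) ui).
    { rewrite <- (LinOn_add m S) by auto. replace (vadd v' vs) with (scal (2 * a) u').
      rewrite (LinOn_scal m S), HSu' by auto. auto.
      unfold vs, z, radial. fold a. apply vec_ext; intro; unfold vadd, vsub, scal; ring. }
    assert (Ha : Rabs (2 * a) <= rho + RB).
    { assert (norm d (scal (2 * a) ui) <= rho + RB) by (rewrite <- Hsum; eapply Rle_trans; [apply norm_triangle| lra]).
      rewrite norm_scal, Hui1 in H0. lra. }
    assert (HSz : vsub (S v') (scal a ui) = S z).
    { rewrite <- HSu', <- (LinOn_scal m S), <- (LinOn_sub m S) by auto with vec. f_equal. }
    assert (Hz1 : norm d (S z) <= rho + Rabs a).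
    { rewrite <- HSz. eapply Rle_trans. apply norm_add_sub. rewrite norm_scal, Hui1. lra. }
    pose proof (Hlo0 z Hz Hzu) as H1.
    assert (Hzb : norm m z <= (rho + Rabs a) / rho).
    { apply (Rmult_le_reg_l rho). lra. replace (rho * ((rho + Rabs a) / rho)) with (rho + Rabs a) by (field; lra). lra. }
    pose proof (norm_le_dot_radial m u' v' Hu'1) as H2. fold a z in H2.
    rewrite Rabs_mult, (Rabs_right 2) in Ha by lra.
    assert (Rabs a <= (rho + RB) / 2) by lra.
    assert ((rho + Rabs a) / rho <= (rho + (rho + RB) / 2) / rho) by (apply Rmult_le_compat_r; [apply Rlt_le, Rinv_0_lt_compat; lra| lra]).
    unfold M0c in Hv'n. lra.
  - intros v w Hv Hw Bv Hd Hn. rewrite HS in * by auto. apply (HP v w); auto.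
Qed.


Definition rotf m (a b : vec) (z : vec) : R := dot m (vadd a b) z / (1 + dot m a b).
Definition rot m (a b z : vec) : vec :=
  vadd (vsub z (scal (rotf m a b z) (vadd a b))) (scal (2 * dot m a z) b).

Lemma Vec_rot m a b z : Vec m a -> Vec m b -> Vec m z -> Vec m (rot m a b z).
Proof. intros; unfold rot; auto with vec. Qed.

Lemma rot_dot m a b z : dot m a a = 1 -> dot m b b = 1 -> 1 + dot m a b <> 0 ->
  dot m (rot m a b z) b = dot m z a.
Proof. intros Ha Hb Hab. unfold rot, rotf. autorewrite with dotE.
  rewrite Hb, ?(dot_comm m b a), ?(dot_comm m z a), ?(dot_comm m z b), ?(dot_comm m b z), ?(dot_comm m a z).
  field. auto. Qed.

Lemma rot_norm m a b z : dot m a a = 1 -> dot m b b = 1 -> 1 + dot m a b <> 0 ->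
  norm m (rot m a b z) = norm m z.
Proof. intros Ha Hb Hab. unfold norm. f_equal. unfold rot, rotf. autorewrite with dotE.
  rewrite Ha, Hb, ?(dot_comm m b a), ?(dot_comm m z a), ?(dot_comm m z b), ?(dot_comm m b z), ?(dot_comm m a z).
  field. auto. Qed.

Lemma rot_close m a b z : dot m a a = 1 -> dot m b b = 1 -> norm m (vsub b a) <= 1/2 ->
  norm m (vsub (rot m a b z) z) <= 8 * norm m z * norm m (vsub b a).
Proof.
  intros Ha Hb Hd. set (e := norm m (vsub b a)) in *. set (f := rotf m a b z).
  assert (Hna : norm m a = 1) by (apply norm_of_sq; lra).
  assert (He0 : 0 <= e) by apply norm_nonneg.
  assert (Hz0 : 0 <= norm m z) by apply norm_nonneg.
  assert (Hab : dot m a b = 1 + dot m a (vsub b a)) by (autorewrite with dotE; rewrite Ha; ring).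
  assert (Hae : Rabs (dot m a (vsub b a)) <= e) by (pose proof (cauchy_schwarz m a (vsub b a)); rewrite Hna in H; unfold e; lra).
  assert (Hden : 3/2 <= 1 + dot m a b) by (rewrite Hab; pose proof (Rle_abs (- dot m a (vsub b a))) as Hq; rewrite Rabs_Ropp in Hq; lra).
  assert (Haz : Rabs (dot m a z) <= norm m z) by (pose proof (cauchy_schwarz m a z); rewrite Hna in H; lra).
  assert (Hbz : Rabs (dot m (vsub b a) z) <= e * norm m z) by (apply cauchy_schwarz).
  assert (Hnb : norm m b = 1) by (apply norm_of_sq; lra).
  assert (Habz : Rabs (dot m (vadd a b) z) <= 2 * norm m z).
  { pose proof (cauchy_schwarz m (vadd a b) z). pose proof (norm_triangle m a b). rewrite Hna, Hnb in H0.
    pose proof (norm_nonneg m (vadd a b)). nra. }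
  assert (Hf : Rabs f <= 4/3 * norm m z).
  { unfold f, rotf. unfold Rdiv. rewrite Rabs_mult, Rabs_inv, (Rabs_right (1 + dot m a b)) by lra.
    apply Rmult_le_reg_r with (1 + dot m a b). lra. rewrite Rmult_assoc, Rinv_l, Rmult_1_r by lra. nra. }
  assert (Hf2 : Rabs (dot m a z - f) <= 4/3 * e * norm m z).
  { assert (E : dot m a z - f = (dot m a z * dot m a (vsub b a) - dot m (vsub b a) z) / (1 + dot m a b)).
    { unfold f, rotf. autorewrite with dotE. rewrite Ha. rewrite ?(dot_comm m z a), ?(dot_comm m z b). field. lra. }
    rewrite E. unfold Rdiv. rewrite Rabs_mult, Rabs_inv, (Rabs_right (1 + dot m a b)) by lra.
    apply Rmult_le_reg_r with (1 + dot m a b). lra. rewrite Rmult_assoc, Rinv_l, Rmult_1_r by lra.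
    eapply Rle_trans. apply Rabs_triang. rewrite Rabs_Ropp, Rabs_mult.
    pose proof (Rabs_pos (dot m a z)). pose proof (Rabs_pos (dot m a (vsub b a))).
    assert (Rabs (dot m a z) * Rabs (dot m a (vsub b a)) <= norm m z * e).
    { apply Rmult_le_compat; auto. }
    assert (0 <= e * norm m z * (1 + dot m a b - 3/2)) by (apply Rmult_le_pos; [apply Rmult_le_pos|]; lra).
    nra. }
  replace (vsub (rot m a b z) z) with (vadd (scal (2 * (dot m a z - f)) a) (scal (2 * dot m a z - f) (vsub b a)))
    by (unfold rot; fold f; apply vec_ext; intro; unfold vadd, vsub, scal; ring).
  eapply Rle_trans. apply norm_triangle. rewrite !norm_scal, Hna. fold e.
  rewrite Rabs_mult, (Rabs_right 2) by lra.
  assert (Rabs (2 * dot m a z - f) <= 2 * norm m z + 4/3 * norm m z).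
  { eapply Rle_trans. apply Rabs_triang. rewrite Rabs_Ropp, Rabs_mult, (Rabs_right 2) by lra. lra. }
  nra.
Qed.


Lemma lincomb_diff s1 s2 m v : vsub (lincomb s1 m v) (lincomb s2 m v) = lincomb (fun j => vsub (s1 j) (s2 j)) m v.
Proof. unfold lincomb. rewrite <- vsum_sub. apply vsum_ext. intros. apply vec_ext; intro; unfold vsub, scal; ring. Qed.

Lemma lincomb_conv d m (sk : nat -> nat -> vec) sl :
  (forall j, (j < m)%nat -> null (fun k => norm d (vsub (sk k j) (sl j)))) ->
  forall v, null (fun k => norm d (vsub (lincomb (sk k) m v) (lincomb sl m v))).
Proof. intros H v. apply null_le with (a := fun k => sumR (fun j => Rabs (v j) * norm d (vsub (sk k j) (sl j))) m).
  - apply (null_sum (fun j k => Rabs (v j) * norm d (vsub (sk k j) (sl j)))). intros j Hj. apply null_scal. auto.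
  - exists O. intros k _. rewrite Rabs_right by (apply Rle_ge, norm_nonneg). rewrite lincomb_diff. apply lincomb_norm_le. Qed.

Lemma lincomb_conv2 d m (sk : nat -> nat -> vec) sl C (vk : nat -> vec) v :
  (forall j, (j < m)%nat -> null (fun k => norm d (vsub (sk k j) (sl j)))) ->
  (forall k w, Vec m w -> norm d (lincomb (sk k) m w) <= C * norm m w) ->
  (forall k, Vec m (vk k)) -> Vec m v -> null (fun k => norm m (vsub (vk k) v)) ->
  null (fun k => norm d (vsub (lincomb (sk k) m (vk k)) (lincomb sl m v))).
Proof. intros H HC Hvk Hv Hn. apply null_le with (a := fun k => C * norm m (vsub (vk k) v) + norm d (vsub (lincomb (sk k) m v) (lincomb sl m v))).
  - apply null_plus. apply null_scal; auto. apply lincomb_conv; auto.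
  - exists O. intros k _. rewrite Rabs_right by (apply Rle_ge, norm_nonneg).
    eapply Rle_trans. apply (norm_sub_triangle d _ (lincomb (sk k) m v)). rewrite <- lincomb_sub.
    pose proof (HC k (vsub (vk k) v) ltac:(auto with vec)). lra. Qed.

Lemma norm_diff_le d u v : Rabs (norm d u - norm d v) <= norm d (vsub u v).
Proof. unfold Rabs. destruct (Rcase_abs (norm d u - norm d v)).
  pose proof (norm_sub_ge d v u). rewrite norm_sub_sym in H. lra. apply norm_sub_ge. Qed.

Lemma null_vec_unique d (f : nat -> vec) a b : Vec d a -> Vec d b ->
  null (fun k => norm d (vsub (f k) a)) -> null (fun k => norm d (vsub (f k) b)) -> a = b.
Proof. intros Ha Hb H1 H2. assert (null (fun _ => norm d (vsub a b))).
  { apply null_le with (a := fun k => norm d (vsub (f k) a) + norm d (vsub (f k) b)). apply null_plus; auto.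
    exists O. intros k _. rewrite Rabs_right by (apply Rle_ge, norm_nonneg). rewrite (norm_sub_sym d (f k) a).
    apply norm_sub_triangle. }
  apply null_zero_const in H. apply norm_zero_inv in H; auto with vec.
  apply vec_ext; intro i. apply (f_equal (fun g => g i)) in H. unfold vsub, vzero in H. lra. Qed.

Fixpoint somes {I : Type} (l : list (option I)) : list I :=
  match l with nil => nil | Some i :: t => i :: somes t | None :: t => somes t end.
Lemma in_somes {I : Type} (l : list (option I)) i : In (Some i) l -> In i (somes l).
Proof. induction l as [|[a|] t IH]; simpl; intros H; auto. destruct H as [H|H]. inversion H; auto. right; auto.
  destruct H as [H|H]. discriminate. auto. Qed.

Lemma dot_cont d x a b : Rabs (dot d a x - dot d b x) <= norm d (vsub a b) * norm d x.
Proof. rewrite <- dot_sub_l. apply cauchy_schwarz. Qed.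

Lemma compact_section d B x : compact d B -> compact d (section d B x).
Proof.
  intros HB I U HU Hcov.
  set (U' := fun (o : option I) => match o with Some i => U i | None => fun y => dot d y x <> 0 end).
  destruct (HB (option I) U') as [l Hl].
  - intros [i|]; simpl. apply HU. intros v Hv Hn.
    exists (Rabs (dot d v x) / (norm d x + 1)). split. apply Rdiv_lt_0_compat. apply Rabs_pos_lt; auto. pose proof (norm_nonneg d x); lra.
    intros w Hw Hd Hw0. pose proof (dot_cont d x v w). rewrite Hw0, Rminus_0_r in H.
    unfold dist in Hd. rewrite norm_sub_sym in Hd. pose proof (norm_nonneg d x).
    pose proof (norm_nonneg d (vsub v w)).
    apply (Rmult_lt_compat_r (norm d x + 1)) in Hd; [|lra]. unfold Rdiv in Hd. rewrite Rmult_assoc, Rinv_l, Rmult_1_r in Hd by lra.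
    nra.
  - intros v Hv. destruct (Req_dec (dot d v x) 0). destruct (Hcov v) as [i Hi]. split; auto. exists (Some i); auto.
    exists None; simpl; auto.
  - exists (somes l). intros v [Bv Hv]. destruct (Hl v Bv) as [[i|] [Hin Hu]]. exists i; split; auto. apply in_somes; auto.
    simpl in Hu. contradiction.
Qed.

Lemma compact_pullback d m (K : vec -> Prop) (S : vec -> vec) c (K' : vec -> Prop) :
  compact d K -> 0 < c ->
  (forall v w, Vec m v -> Vec m w -> c * norm m (vsub v w) <= norm d (vsub (S v) (S w))) ->
  (forall v, K' v <-> Vec m v /\ K (S v)) -> (forall y, K y -> exists v, Vec m v /\ y = S v) ->
  compact m K'.
Proof.
  intros HK Hc Hlip HK' Him I U HU Hcov.
  set (U' := fun (i : I) (y : vec) => exists v eps, Vec m v /\ 0 < eps /\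
              (forall v', Vec m v' -> dist m v' v < eps -> U i v') /\ norm d (vsub y (S v)) < c * eps).
  destruct (HK I U') as [l Hl].
  - intros i y Hy [v [eps [Hv [He [Hb Hn]]]]]. exists (c * eps - norm d (vsub y (S v))). split. lra.
    intros w Hw Hd. exists v, eps. repeat split; auto. unfold dist in Hd.
    pose proof (norm_sub_triangle d w y (S v)). lra.
  - intros y Ky. destruct (Him y Ky) as [v [Hv ->]]. assert (K' v) by (apply HK'; auto).
    destruct (Hcov v H) as [i Hi]. destruct (HU i v Hv Hi) as [eps [He Hb]]. exists i, v, eps. repeat split; auto.
    replace (vsub (S v) (S v)) with vzero by (apply vec_ext; intro; unfold vsub, vzero; ring). rewrite norm_zero. nra.
  - exists l. intros v Kv. apply HK' in Kv as Kv'. destruct Kv' as [Hv KSv]. destruct (Hl (S v) KSv) as [i [Hi [v0 [eps [Hv0 [He [Hb Hn]]]]]]].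
    exists i. split; auto. apply Hb; auto. unfold dist. pose proof (Hlip v v0 Hv Hv0).
    apply (Rmult_lt_reg_l c); auto. lra.
Qed.


Lemma level_norm m u' y tau : dot m u' u' = 1 -> dot m y u' = tau ->
  dot m y y = tau * tau + dot m (vsub y (scal tau u')) (vsub y (scal tau u')).
Proof. intros H1 H2. autorewrite with dotE. rewrite (dot_comm m u' y), H1, H2. ring. Qed.

Lemma rev_assembly m (K' : vec -> Prop) u' R :
  Vec m u' -> norm m u' = 1 ->
  (forall v, K' v -> Vec m v) -> convex K' ->
  (forall v w, K' v -> Vec m w -> dot m w u' = dot m v u' -> norm m w = norm m v -> K' w) ->
  (forall w, Vec m w -> (forall eps, 0 < eps -> exists w', K' w' /\ norm m (vsub w' w) < eps) -> K' w) ->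
  (forall v, K' v -> norm m v <= R) ->
  forall u t, span1 u' u -> u <> vzero ->
   (forall w, ~ (K' w /\ dot m w u = t)) \/
   exists c r, span1 u' c /\ dot m c u = t /\ 0 <= r /\
     forall w, Vec m w -> ((K' w /\ dot m w u = t) <-> (dot m w u = t /\ dist m w c <= r)).
Proof.
  intros Hu'V Hu'1 HKV Hcv HP Hcl HR u t [sg ->] Hnz.
  assert (Hu'd : dot m u' u' = 1) by (apply unit_dot; auto).
  assert (Hsg : sg <> 0). { intro E; apply Hnz. subst. apply vec_ext; intro; unfold scal, vzero; ring. }
  set (tau := t / sg).
  assert (Hlev : forall w, dot m w (scal sg u') = t <-> dot m w u' = tau).
  { intros w. rewrite dot_scal_r. unfold tau. split; intros H. rewrite <- H; field; auto. rewrite H; field; auto. }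
  destruct (classic (exists w0, K' w0 /\ dot m w0 (scal sg u') = t)) as [[w0 [Kw0 Hw0]]|Hno].
  2:{ left. intros w Hw. apply Hno. exists w; auto. }
  right. set (c := scal tau u').
  assert (Hcu : dot m c u' = tau) by (unfold c; rewrite dot_scal_l, Hu'd; ring).
  set (E := fun r => exists w, K' w /\ dot m w u' = tau /\ r = norm m (vsub w c)).
  assert (HEb : bound E).
  { exists (R + Rabs tau). intros r [w [Kw [Hw ->]]]. eapply Rle_trans. apply norm_add_sub.
    unfold c. rewrite norm_scal, Hu'1. specialize (HR w Kw). lra. }
  assert (HEn : exists r, E r) by (exists (norm m (vsub w0 c)); exists w0; repeat split; auto; apply Hlev; auto).
  destruct (completeness E HEb HEn) as [r [Hub Hlub]].
  assert (Hr0 : 0 <= r).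
  { apply Rle_trans with (norm m (vsub w0 c)). apply norm_nonneg. apply Hub. exists w0; repeat split; auto. apply Hlev; auto. }
  assert (Hinner : forall w w1, Vec m w -> dot m w u' = tau -> K' w1 -> dot m w1 u' = tau ->
            norm m (vsub w c) < norm m (vsub w1 c) -> K' w).
  { intros w w1 Hw Hwu Kw1 Hw1u Hlt.
    set (r0 := norm m (vsub w1 c)) in *. set (dl := norm m (vsub w c)) in *.
    assert (Hdl : 0 <= dl) by apply norm_nonneg.
    assert (Hr0p : 0 < r0) by (unfold r0, dl in *; lra).
    set (e := if Req_EM_T dl 0 then scal (/ r0) (vsub w1 c) else scal (/ dl) (vsub w c)).
    assert (He : Vec m e /\ dot m e u' = 0 /\ norm m e = 1 /\ w = vadd c (scal dl e)).
    { unfold e. destruct (Req_EM_T dl 0) as [E0|E0].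
      - assert (Ewc : w = c).
        { assert (vsub w c = vzero) by (apply (norm_zero_inv m); [unfold c; auto with vec| auto]).
          apply vec_ext; intro i. apply (f_equal (fun g => g i)) in H. unfold vsub, vzero in H. lra. }
        repeat split. unfold c; auto with vec. rewrite dot_scal_l, dot_sub_l, Hw1u, Hcu; ring.
        rewrite norm_scal, Rabs_right by (apply Rle_ge, Rlt_le, Rinv_0_lt_compat; auto). fold r0. field; lra.
        rewrite E0, Ewc. apply vec_ext; intro; unfold vadd, scal; ring.
      - assert (0 < dl) by lra. repeat split. unfold c; auto with vec. rewrite dot_scal_l, dot_sub_l, Hwu, Hcu; ring.
        rewrite norm_scal, Rabs_right by (apply Rle_ge, Rlt_le, Rinv_0_lt_compat; auto). fold dl. field; lra.
        apply vec_ext; intro; unfold vadd, vsub, scal; field; lra. }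
    destruct He as [HeV [Heu [He1 Hwe]]].
    assert (Hed : dot m e e = 1) by (apply unit_dot; auto).
    assert (Heu' : dot m u' e = 0) by (rewrite dot_comm; auto).
    set (w2 := vadd c (scal r0 e)). set (w3 := vsub c (scal r0 e)).
    assert (Hnw1 : dot m w1 w1 = tau * tau + r0 * r0).
    { rewrite (level_norm m u' w1 tau) by auto. fold c. unfold r0. rewrite norm_sq. auto. }
    assert (K2 : K' w2).
    { apply (HP w1); auto. unfold w2, c; auto with vec. unfold w2; rewrite dot_add_l, dot_scal_l, Hcu, Heu, Hw1u; ring.
      unfold norm. f_equal. rewrite Hnw1. unfold w2, c. autorewrite with dotE. rewrite ?Hu'd, ?Hed, ?(dot_comm m e u'), ?Heu, ?Heu'. ring. }
    assert (K3 : K' w3).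
    { apply (HP w1); auto. unfold w3, c; auto with vec. unfold w3; rewrite dot_sub_l, dot_scal_l, Hcu, Heu, Hw1u; ring.
      unfold norm. f_equal. rewrite Hnw1. unfold w3, c. autorewrite with dotE. rewrite ?Hu'd, ?Hed, ?(dot_comm m e u'), ?Heu, ?Heu'. ring. }
    specialize (Hcv w2 w3 ((1 + dl / r0) / 2) K2 K3).
    replace w with (vadd (scal ((1 + dl / r0) / 2) w2) (scal (1 - (1 + dl / r0) / 2) w3)).
    apply Hcv. split. assert (0 <= dl / r0) by (apply Rle_mult_inv_pos; lra). lra.
    assert (dl / r0 < 1) by (apply Rmult_lt_reg_r with r0; [lra| unfold Rdiv; rewrite Rmult_assoc, Rinv_l, Rmult_1_r; lra]). lra.
    rewrite Hwe. unfold w2, w3. apply vec_ext; intro; unfold vadd, vsub, scal; field; lra. }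
  exists c, r. split; [exists tau; auto|]. split. unfold c; rewrite dot_scal_l, dot_scal_r, Hu'd; unfold tau; field; auto.
  split; auto. intros w Hw. rewrite Hlev. split.
  - intros [Kw Hwu]. split; auto. apply Hub. exists w; auto.
  - intros [Hwu Hd]. split; auto. unfold dist in Hd.
    assert (Hlt : forall w, Vec m w -> dot m w u' = tau -> norm m (vsub w c) < r -> K' w).
    { intros w' Hw' Hw'u Hlt'. destruct (classic (exists y, E y /\ norm m (vsub w' c) < y)) as [[y [[w1 [Kw1 [Hw1 ->]]] Hy]]|Hny].
      - apply (Hinner w' w1); auto.
      - exfalso. assert (r <= norm m (vsub w' c)). { apply Hlub. intros y Ey. apply Rnot_lt_le. intro. apply Hny. exists y; auto. }
        lra. }
    destruct (Rle_lt_or_eq_dec _ _ Hd) as [Hl|He]. apply Hlt; auto.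
    destruct (Req_dec r 0) as [R0|R0].
    + assert (Ewc : w = c).
      { rewrite R0 in He. assert (vsub w c = vzero) by (apply (norm_zero_inv m); [unfold c; auto with vec| auto]).
        apply vec_ext; intro i. apply (f_equal (fun g => g i)) in H. unfold vsub, vzero in H. lra. }
      assert (Ew0 : w0 = c).
      { assert (norm m (vsub w0 c) <= r) by (apply Hub; exists w0; repeat split; auto; apply Hlev; auto).
        pose proof (norm_nonneg m (vsub w0 c)).
        assert (vsub w0 c = vzero) by (apply (norm_zero_inv m); [unfold c; auto with vec| lra]).
        apply vec_ext; intro i. apply (f_equal (fun g => g i)) in H1. unfold vsub, vzero in H1. lra. }
      rewrite Ewc, <- Ew0; auto.
    + apply Hcl; auto. intros eps Heps.
      set (eta := Rmin (1/2) (eps / (2 * r))).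
      assert (Heta : 0 < eta /\ eta <= 1/2 /\ eta <= eps / (2 * r)).
      { unfold eta. split. apply Rmin_pos. lra. apply Rdiv_lt_0_compat; lra. split; [apply Rmin_l|apply Rmin_r]. }
      exists (vadd c (scal (1 - eta) (vsub w c))). split.
      * apply Hlt. unfold c; auto with vec. rewrite dot_add_l, dot_scal_l, dot_sub_l, Hwu, Hcu; ring.
        replace (vsub (vadd c (scal (1 - eta) (vsub w c))) c) with (scal (1 - eta) (vsub w c)) by (apply vec_ext; intro; unfold vadd, vsub, scal; ring).
        rewrite norm_scal, Rabs_right, He by lra. nra.
      * replace (vsub (vadd c (scal (1 - eta) (vsub w c))) w) with (scal (- eta) (vsub w c)) by (apply vec_ext; intro; unfold vadd, vsub, scal; ring).
        rewrite norm_scal, He, Rabs_left by lra.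
        assert (eta * r <= eps / 2). { replace (eps / 2) with (eps / (2 * r) * r) by (field; lra). apply Rmult_le_compat_r; lra. }
        lra.
Qed.


Lemma null_norm_from_coords m (f : nat -> vec) v :
  (forall l, (l < m)%nat -> null (fun k => f k l - v l)) -> null (fun k => norm m (vsub (f k) v)).
Proof. intros H. apply null_le with (a := fun k => sumR (fun l => Rabs (f k l - v l)) m).
  apply (null_sum (fun l k => Rabs (f k l - v l))). intros; apply null_abs; auto.
  exists O. intros k _. rewrite Rabs_right by (apply Rle_ge, norm_nonneg). apply norm_le_sum_abs. Qed.

Lemma extract_vec m (vk : nat -> vec) M : (forall k l, (l < m)%nat -> Rabs (vk k l) <= M) ->
  exists phi v, incr phi /\ Vec m v /\ null (fun k => norm m (vsub (vk (phi k)) v)).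
Proof.
  intros HM. destruct (extract_list (seq 0 m) (fun l k => vk k l) M) as [phi [Hphi Hl]].
  { intros l Hl0 k. apply in_seq in Hl0. apply HM; lia. }
  exists phi, (fun l => if Nat.ltb l m then limR (fun k => vk (phi k) l) else 0). split; auto. split.
  intros l Hl0. destruct (Nat.ltb_spec l m); [lia|auto].
  apply null_norm_from_coords. intros l Hl0. destruct (Nat.ltb_spec l m); [|lia].
  apply limR_spec. apply Hl. apply in_seq; lia.
Qed.

Lemma onto_limit d m (sk : nat -> nat -> vec) sl (xk : nat -> vec) x C c :
  0 < c -> (forall j, (j < m)%nat -> Vec d (sl j)) ->
  (forall j, (j < m)%nat -> null (fun k => norm d (vsub (sk k j) (sl j)))) ->
  (forall k v, Vec m v -> norm d (lincomb (sk k) m v) <= C * norm m v) ->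
  (forall k v, Vec m v -> c * norm m v <= norm d (lincomb (sk k) m v)) ->
  (forall k w, Vec d w -> dot d w (xk k) = 0 -> exists v, Vec m v /\ w = lincomb (sk k) m v) ->
  (forall k, OnSphere d (xk k)) -> null (fun k => norm d (vsub (xk k) x)) ->
  forall w, Vec d w -> dot d w x = 0 -> exists v, Vec m v /\ w = lincomb sl m v.
Proof.
  intros Hc Hsl Hconv HC Hlo Honto Hxk Hx w Hw Hwx.
  set (wk := fun k => vsub w (scal (dot d w (xk k)) (xk k))).
  assert (Hwk : forall k, Vec d (wk k) /\ dot d (wk k) (xk k) = 0).
  { intros k. destruct (Hxk k) as [HV H1]. split. unfold wk; auto with vec.
    unfold wk. autorewrite with dotE. rewrite (unit_dot d (xk k) H1). ring. }
  assert (Hch : forall k, exists v, Vec m v /\ wk k = lincomb (sk k) m v) by (intro k; apply Honto; apply Hwk).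
  set (vk := fun k => proj1_sig (constructive_indefinite_description _ (Hch k))).
  assert (Hvk : forall k, Vec m (vk k) /\ wk k = lincomb (sk k) m (vk k)).
  { intros k. unfold vk. destruct (constructive_indefinite_description _ (Hch k)); auto. }
  assert (Hbd : forall k, norm m (vk k) <= 2 * norm d w / c).
  { intros k. destruct (Hvk k) as [HV E]. pose proof (Hlo k (vk k) HV). rewrite <- E in H.
    assert (norm d (wk k) <= 2 * norm d w).
    { unfold wk. eapply Rle_trans. apply norm_add_sub. rewrite norm_scal. destruct (Hxk k) as [_ H1]. rewrite H1.
      pose proof (cauchy_schwarz d w (xk k)). rewrite H1 in H0. lra. }
    apply Rmult_le_reg_l with c; auto. replace (c * (2 * norm d w / c)) with (2 * norm d w) by (field; lra). lra. }
  destruct (extract_vec m vk (2 * norm d w / c)) as [phi [v [Hphi [Hv Hnull]]]].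
  { intros k l Hl. eapply Rle_trans. apply coord_le_norm; eauto. auto. }
  exists v. split; auto.
  assert (H1 : null (fun k => norm d (vsub (lincomb (sk (phi k)) m (vk (phi k))) (lincomb sl m v)))).
  { apply (lincomb_conv2 d m (fun k => sk (phi k)) sl C (fun k => vk (phi k)) v); auto.
    intros j Hj. apply (null_subseq (fun k => norm d (vsub (sk k j) (sl j)))). apply incr_ge; auto. auto.
    intros; apply Hvk. }
  assert (H2 : null (fun k => norm d (vsub (lincomb (sk (phi k)) m (vk (phi k))) w))).
  { apply null_le with (a := fun k => norm d w * norm d (vsub (xk (phi k)) x)).
    apply null_scal. apply (null_subseq (fun k => norm d (vsub (xk k) x))). apply incr_ge; auto. auto.
    exists O. intros k _. rewrite Rabs_right by (apply Rle_ge, norm_nonneg). destruct (Hvk (phi k)) as [_ E]. rewrite <- E.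
    unfold wk. replace (vsub (vsub w (scal (dot d w (xk (phi k))) (xk (phi k)))) w) with (scal (- dot d w (xk (phi k))) (xk (phi k)))
      by (apply vec_ext; intro; unfold vsub, scal; ring).
    rewrite norm_scal. destruct (Hxk (phi k)) as [_ Hn]. rewrite Hn, Rmult_1_r, Rabs_Ropp.
    replace (dot d w (xk (phi k))) with (dot d w (xk (phi k)) - dot d w x) by (rewrite Hwx; ring).
    rewrite <- dot_sub_r. apply cauchy_schwarz. }
  apply (null_vec_unique d _ w (lincomb sl m v)) in H2; auto. apply Vec_lincomb; auto.
Qed.

Lemma dot_close a b m : dot m a a = 1 -> norm m (vsub b a) <= 1/2 -> 3/2 <= 1 + dot m a b.
Proof. intros Ha Hd. assert (Hna : norm m a = 1) by (apply norm_of_sq; lra).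
  assert (dot m a b = 1 + dot m a (vsub b a)) by (autorewrite with dotE; rewrite Ha; ring).
  pose proof (cauchy_schwarz m a (vsub b a)). rewrite Hna in H0.
  pose proof (Rle_abs (- dot m a (vsub b a))). rewrite Rabs_Ropp in H1. lra. Qed.

Lemma P_limit d B m (sk : nat -> nat -> vec) sl (uk' : nat -> vec) ul' rho C :
  SymConvexBody d B -> 0 < rho -> (forall z, Vec d z -> norm d z < rho -> B z) ->
  (forall j, (j < m)%nat -> Vec d (sl j)) -> (forall k j, (j < m)%nat -> Vec d (sk k j)) ->
  (forall j, (j < m)%nat -> null (fun k => norm d (vsub (sk k j) (sl j)))) ->
  (forall k v, Vec m v -> norm d (lincomb (sk k) m v) <= C * norm m v) ->
  (forall k, Vec m (uk' k) /\ norm m (uk' k) = 1) -> Vec m ul' -> norm m ul' = 1 ->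
  null (fun k => norm m (vsub (uk' k) ul')) ->
  (forall k v w, Vec m v -> Vec m w -> B (lincomb (sk k) m v) -> dot m w (uk' k) = dot m v (uk' k) ->
      norm m w = norm m v -> B (lincomb (sk k) m w)) ->
  forall v w, Vec m v -> Vec m w -> B (lincomb sl m v) -> dot m w ul' = dot m v ul' -> norm m w = norm m v ->
  B (lincomb sl m w).
Proof.
  intros HB Hr Hin Hsl Hsk Hconv HC Huk Hul V1 Hun HPk v w Hv Hw Bv Hd Hn.
  pose proof HB as [HBV [HBc _]].
  assert (Hul1 : dot m ul' ul' = 1) by (apply unit_dot; auto).
  apply (compact_closed d B); auto. apply Vec_lincomb; auto.
  intros eps Heps.
  set (NS := norm d (lincomb sl m w)).
  assert (HNS : 0 <= NS) by apply norm_nonneg.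
  set (dl := Rmin (1/2) (eps / (2 * (NS + 1)))).
  assert (Hdl : 0 < dl /\ dl <= 1/2 /\ dl <= eps / (2 * (NS + 1))).
  { unfold dl. split. apply Rmin_pos. lra. apply Rdiv_lt_0_compat; lra. split; [apply Rmin_l|apply Rmin_r]. }
  set (lam := 1 - dl).
  set (vk := fun k => rot m ul' (uk' k) (scal lam v)).
  set (wk := fun k => rot m ul' (uk' k) (scal lam w)).
  assert (Hrotc : forall z, null (fun k => norm m (vsub (rot m ul' (uk' k) z) z))).
  { intros z. apply null_le with (a := fun k => 8 * norm m z * norm m (vsub (uk' k) ul')).
    apply null_scal; auto. destruct (Hun (1/2) ltac:(lra)) as [N HN]. exists N. intros k Hk.
    rewrite Rabs_right by (apply Rle_ge, norm_nonneg). apply rot_close; auto. apply unit_dot, Huk.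
    specialize (HN k Hk). rewrite Rabs_right in HN by (apply Rle_ge, norm_nonneg). lra. }
  assert (HVk : forall k, Vec m (vk k) /\ Vec m (wk k)) by (intros; unfold vk, wk; split; apply Vec_rot; auto with vec; apply Huk).
  assert (Cv : null (fun k => norm d (vsub (lincomb (sk k) m (vk k)) (lincomb sl m (scal lam v))))).
  { apply (lincomb_conv2 d m sk sl C vk); auto with vec. intros; apply HVk. apply Hrotc. }
  assert (Cw : null (fun k => norm d (vsub (lincomb (sk k) m (wk k)) (lincomb sl m (scal lam w))))).
  { apply (lincomb_conv2 d m sk sl C wk); auto with vec. intros; apply HVk. apply Hrotc. }
  destruct (Cv (dl * rho)) as [N1 HN1]. nra.
  destruct (Cw (eps / 2)) as [N2 HN2]. lra.
  destruct (Hun (1/2)) as [N3 HN3]. lra.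
  set (k := max N1 (max N2 N3)).
  specialize (HN1 k ltac:(unfold k; lia)). specialize (HN2 k ltac:(unfold k; lia)). specialize (HN3 k ltac:(unfold k; lia)).
  rewrite Rabs_right in HN1, HN2, HN3 by (apply Rle_ge, norm_nonneg).
  destruct (Huk k) as [HukV Huk1].
  assert (Hden : 3/2 <= 1 + dot m ul' (uk' k)) by (apply dot_close; auto; lra).
  assert (Bvk : B (lincomb (sk k) m (vk k))).
  { apply (shrink_in d B rho (lincomb sl m v) lam); auto. unfold lam; lra.
    apply Vec_lincomb; auto. rewrite <- lincomb_scal. unfold lam. replace (1 - (1 - dl)) with dl by ring. auto. }
  assert (Bwk : B (lincomb (sk k) m (wk k))).
  { apply (HPk k (vk k) (wk k)); auto; try apply HVk.
    - unfold vk, wk. rewrite !rot_dot by (auto; try apply unit_dot; auto; lra). rewrite !dot_scal_l, Hd. auto.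
    - unfold vk, wk. rewrite !rot_norm by (auto; try apply unit_dot; auto; lra). rewrite !norm_scal, Hn. auto. }
  exists (lincomb (sk k) m (wk k)). split; auto.
  eapply Rle_lt_trans. apply (norm_sub_triangle d _ (lincomb sl m (scal lam w))).
  rewrite lincomb_scal. fold NS.
  replace (vsub (scal lam (lincomb sl m w)) (lincomb sl m w)) with (scal (- dl) (lincomb sl m w))
    by (unfold lam; apply vec_ext; intro; unfold vsub, scal; ring).
  rewrite norm_scal, Rabs_Ropp, Rabs_right by lra. fold NS. rewrite lincomb_scal in HN2.
  assert (dl * NS <= eps / 2 * (NS / (NS + 1))).
  { apply Rle_trans with (eps / (2 * (NS + 1)) * NS). apply Rmult_le_compat_r; lra.
    right. field. lra. }
  assert (NS / (NS + 1) < 1) by (apply Rmult_lt_reg_r with (NS + 1); [lra| unfold Rdiv; rewrite Rmult_assoc, Rinv_l, Rmult_1_r; lra]).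
  nra.
Qed.


Lemma final_construct d B x L u rho RB m (sk : nat -> nat -> vec) (uk' xk uk : nat -> vec) (sl : nat -> vec) (ul' : vec) :
  SymConvexBody d B -> 0 < rho -> 0 < RB -> (forall z, Vec d z -> norm d z < rho -> B z) ->
  (forall z, B z -> norm d z <= RB) ->
  OnSphere d x -> OnSphere d u -> (forall v, L v <-> span1 u v) ->
  (forall k, OnSphere d (xk k)) ->
  (forall k j, (j < m)%nat -> Vec d (sk k j)) ->
  (forall k, Vec m (uk' k) /\ norm m (uk' k) = 1) ->
  (forall k, lincomb (sk k) m (uk' k) = uk k) ->
  (forall k v, Vec m v -> dot d (lincomb (sk k) m v) (xk k) = 0) ->
  (forall k w, Vec d w -> dot d w (xk k) = 0 -> exists v, Vec m v /\ w = lincomb (sk k) m v) ->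
  (forall k v, Vec m v -> norm d (lincomb (sk k) m v) <= (1 + RB) * norm m v) ->
  (forall k v, Vec m v -> cst rho RB * norm m v <= norm d (lincomb (sk k) m v)) ->
  (forall k v w, Vec m v -> Vec m w -> B (lincomb (sk k) m v) -> dot m w (uk' k) = dot m v (uk' k) ->
      norm m w = norm m v -> B (lincomb (sk k) m w)) ->
  (forall j, (j < m)%nat -> Vec d (sl j)) -> Vec m ul' ->
  (forall j, (j < m)%nat -> null (fun k => norm d (vsub (sk k j) (sl j)))) ->
  null (fun k => norm m (vsub (uk' k) ul')) ->
  null (fun k => norm d (vsub (xk k) x)) ->
  null (fun k => norm d (vsub (uk k) u)) ->
  AffSymBodyRevolution d (perp d x) (section d B x) L.
Proof.
  intros HB Hr HRB Hin Hbd [HxV Hx1] [HuV Hu1] HL Hxk Hsk Huk Hsku Hperpk Hontok Hupk Hlok HPk Hsl Hul Hconv Hconvu Hconvx Hconvuk.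
  pose proof HB as [HBV [HBc [HBcv [_ HBs]]]].
  set (S := lincomb sl m).
  set (c := cst rho RB). assert (Hc : 0 < c) by (apply cst_pos; auto).
  set (C := 1 + RB). assert (HC : 0 < C) by (unfold C; lra).
  assert (HSV : forall v, Vec d (S v)) by (intros; apply Vec_lincomb; auto).
  assert (Hnk : forall v, null (fun k => norm d (lincomb (sk k) m v) - norm d (S v))).
  { intros v. apply null_le with (a := fun k => norm d (vsub (lincomb (sk k) m v) (S v))).
    apply lincomb_conv; auto. exists O; intros k _. apply norm_diff_le. }
  assert (Hup : forall v, Vec m v -> norm d (S v) <= C * norm m v).
  { intros v Hv. apply (null_lim_ge _ _ (Hnk v)). exists O; intros; apply Hupk; auto. }
  assert (Hlo : forall v, Vec m v -> c * norm m v <= norm d (S v)).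
  { intros v Hv. apply (null_lim_le _ _ (Hnk v)). exists O; intros; apply Hlok; auto. }
  assert (Hperp : forall v, Vec m v -> dot d (S v) x = 0).
  { intros v Hv. apply null_zero_const. apply null_le with
      (a := fun k => norm d (vsub (S v) (lincomb (sk k) m v)) * 1 + C * norm m v * norm d (vsub (xk k) x)).
    - apply null_plus. apply null_le with (a := fun k => norm d (vsub (lincomb (sk k) m v) (S v))).
      apply lincomb_conv; auto. exists O; intros k _. rewrite norm_sub_sym, Rmult_1_r. rewrite Rabs_right by (apply Rle_ge, norm_nonneg). lra.
      apply null_scal; auto.
    - exists O; intros k _. replace (dot d (S v) x) with (dot d (vsub (S v) (lincomb (sk k) m v)) x + dot d (lincomb (sk k) m v) (vsub x (xk k)))
        by (autorewrite with dotE; rewrite (Hperpk k v Hv); ring).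
      eapply Rle_trans. apply Rabs_triang. rewrite <- Hx1.
      pose proof (cauchy_schwarz d (vsub (S v) (lincomb (sk k) m v)) x).
      pose proof (cauchy_schwarz d (lincomb (sk k) m v) (vsub x (xk k))).
      rewrite norm_sub_sym in H0. pose proof (Hupk k v Hv). pose proof (norm_nonneg d (vsub (xk k) x)).
      fold C in H1. nra. }
  assert (Hul1 : norm m ul' = 1).
  { assert (null (fun _ => 1 - norm m ul')).
    { apply null_le with (a := fun k => norm m (vsub (uk' k) ul')); auto. exists O; intros k _.
      destruct (Huk k) as [_ H1]. rewrite <- H1. apply norm_diff_le. }
    apply null_zero_const in H. lra. }
  assert (HSu : S ul' = u).
  { apply (null_vec_unique d uk); auto.
    apply null_le with (a := fun k => norm d (vsub (lincomb (sk k) m (uk' k)) (S ul'))).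
    apply (lincomb_conv2 d m sk sl C uk' ul'); auto. intros; apply Huk.
    exists O; intros k _. rewrite Hsku. rewrite Rabs_right by (apply Rle_ge, norm_nonneg). lra. }
  assert (Honto : forall w, Vec d w -> dot d w x = 0 -> exists v, Vec m v /\ w = S v).
  { apply (onto_limit d m sk sl xk x C c); auto. }
  assert (HP : forall v w, Vec m v -> Vec m w -> B (S v) -> dot m w ul' = dot m v ul' -> norm m w = norm m v -> B (S w)).
  { apply (P_limit d B m sk sl uk' ul' rho C); auto. }
  assert (Hlip : forall v w, Vec m v -> Vec m w -> c * norm m (vsub v w) <= norm d (vsub (S v) (S w))).
  { intros v w Hv Hw. unfold S. rewrite <- lincomb_sub. apply Hlo. auto with vec. }
  set (K' := fun v => Vec m v /\ section d B x (S v)).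
  exists m, S, K', (span1 ul'). split; [|split; [|split]].
  - split; [|split; [|split]].
    + intros; apply HSV.
    + intros; apply lincomb_lin.
    + intros v w Hv Hw E. pose proof (Hlip v w Hv Hw). rewrite E in H.
      replace (vsub (S w) (S w)) with vzero in H by (apply vec_ext; intro; unfold vsub, vzero; ring).
      rewrite norm_zero in H. pose proof (norm_nonneg m (vsub v w)).
      assert (H2 : norm m (vsub v w) = 0) by nra. apply norm_zero_inv in H2; auto with vec.
      apply vec_ext; intro i. apply (f_equal (fun g => g i)) in H2. unfold vsub, vzero in H2. lra.
    + intros w. split. intros [Hw Hwx]. apply Honto; auto. intros [v [Hv ->]]. split; auto.
  - assert (HK'V : forall v, K' v -> Vec m v) by (intros v [Hv _]; auto).
    assert (HK'P : forall v w, K' v -> Vec m w -> dot m w ul' = dot m v ul' -> norm m w = norm m v -> K' w).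
    { intros v w [Hv [Bv _]] Hw Hd Hn. split; auto. split. apply (HP v w); auto. apply Hperp; auto. }
    assert (HK'cv : convex K').
    { intros a b t [Ha [Ba Hax]] [Hb [Bb Hbx]] Ht. split. auto with vec. unfold S. rewrite lincomb_lin. split.
      apply HBcv; auto. autorewrite with dotE. fold S. rewrite Hax, Hbx. ring. }
    assert (HK'bd : forall v, K' v -> norm m v <= RB / c).
    { intros v [Hv [Bv _]]. apply Rmult_le_reg_l with c; auto. replace (c * (RB / c)) with RB by (field; lra).
      pose proof (Hlo v Hv). pose proof (Hbd _ Bv). lra. }
    assert (HK'cl : forall w, Vec m w -> (forall eps, 0 < eps -> exists w', K' w' /\ norm m (vsub w' w) < eps) -> K' w).
    { intros w Hw Happ. split; auto. split; [|apply Hperp; auto].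
      apply (compact_closed d B); auto. intros eps Heps. destruct (Happ (eps / C)) as [w' [[Hw' [Bw' _]] Hd]].
      apply Rdiv_lt_0_compat; lra. exists (S w'). split; auto. unfold S. rewrite <- lincomb_sub. fold S.
      eapply Rle_lt_trans. apply Hup. auto with vec. apply Rmult_lt_reg_l with (/ C). apply Rinv_0_lt_compat; lra.
      rewrite <- Rmult_assoc, Rinv_l, Rmult_1_l by lra. rewrite Rmult_comm. auto. }
    split; [|split].
    + split; [|split; [|split; [|split]]]; auto.
      * apply (compact_pullback d m (section d B x) S c); auto. apply compact_section; auto.
        intros v. unfold K'. tauto.
        intros y [By Hyx]. apply Honto; auto.
      * exists vzero, (rho / C). split. apply Vec_zero. split. apply Rdiv_lt_0_compat; lra.
        intros w Hw Hd. unfold dist in Hd. replace (vsub w vzero) with w in Hd by (apply vec_ext; intro; unfold vsub, vzero; ring).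
        split; auto. split; [|apply Hperp; auto]. apply Hin; auto. eapply Rle_lt_trans. apply Hup; auto.
        apply Rmult_lt_reg_l with (/ C). apply Rinv_0_lt_compat; lra.
        rewrite <- Rmult_assoc, Rinv_l, Rmult_1_l by lra. rewrite Rmult_comm. auto.
      * intros v [Hv [Bv Hvx]]. split. auto with vec. unfold S. rewrite lincomb_opp. split. apply HBs; auto.
        rewrite dot_opp_l. fold S. rewrite Hvx; ring.
    + exists ul'. split; auto. split. intro E. rewrite E, norm_zero in Hul1. lra. tauto.
    + intros u0 t Hu0 Hnz. apply (rev_assembly m K' ul' (RB / c)); auto.
  - intros w. split.
    + intros [Bw Hwx]. destruct (Honto w (HBV w Bw) Hwx) as [v [Hv ->]]. exists v. split; auto. split; auto. split; auto.
    + intros [v [[Hv Hs] ->]]. auto.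
  - intros w. rewrite HL. split.
    + intros [t ->]. exists (scal t ul'). split. exists t; auto. unfold S. rewrite lincomb_scal. fold S. rewrite HSu. auto.
    + intros [v [[t ->] ->]]. exists t. unfold S. rewrite lincomb_scal. fold S. rewrite HSu. auto.
Qed.


Lemma lincomb_basis s m j : (j < m)%nat -> lincomb s m (basis j) = s j.
Proof. intros Hj. apply vec_ext; intro l. unfold lincomb, vsum, scal, basis.
  rewrite <- (sumR_single (s j l) j m Hj). apply sumR_ext. intros i Hi.
  destruct (Nat.eqb_spec i j); subst; ring. Qed.

Lemma INR_close_eq a b : Rabs (INR a - INR b) < 1 -> a = b.
Proof. intros H. destruct (lt_eq_lt_dec a b) as [[h|h]|h]; auto; exfalso.
  - apply le_INR in h. rewrite S_INR in h. rewrite Rabs_left in H by lra. lra.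
  - apply le_INR in h. rewrite S_INR in h. rewrite Rabs_right in H by lra. lra. Qed.

Lemma choice3 {A B C : Type} (P : nat -> A -> B -> C -> Prop) :
  (forall i, exists a b c, P i a b c) -> exists fa fb fc, forall i, P i (fa i) (fb i) (fc i).
Proof. intros H.
  set (fa := fun i => proj1_sig (constructive_indefinite_description _ (H i))).
  assert (Ha : forall i, exists b c, P i (fa i) b c) by (intro i; unfold fa; destruct (constructive_indefinite_description _ (H i)); auto).
  set (fb := fun i => proj1_sig (constructive_indefinite_description _ (Ha i))).
  assert (Hb : forall i, exists c, P i (fa i) (fb i) c) by (intro i; unfold fb; destruct (constructive_indefinite_description _ (Ha i)); auto).
  set (fc := fun i => proj1_sig (constructive_indefinite_description _ (Hb i))).
  exists fa, fb, fc. intro i. unfold fc. destruct (constructive_indefinite_description _ (Hb i)); auto. Qed.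

Theorem mainTheorem13 (n : nat) (B : vec -> Prop) (xs : nat -> vec) (x : vec)
  (Ls : nat -> vec -> Prop) (L : vec -> Prop) :
  SymConvexBody (S n) B ->
  (forall i, OnSphere (S n) (xs i)) -> OnSphere (S n) x ->
  ConvergesTo (S n) xs x ->
  (forall i, IsLine (S n) (Ls i)) -> IsLine (S n) L ->
  RPConverges (S n) Ls L ->
  (forall i, AffSymBodyRevolution (S n) (perp (S n) (xs i))
               (section (S n) B (xs i)) (Ls i)) ->
  AffSymBodyRevolution (S n) (perp (S n) x) (section (S n) B x) L.
Proof.
  intros HB Hxs Hx Hconvx _ _ [us [u [Hus [Hu [HLu Husc]]]]] Haff.
  set (d := S n). fold d in HB, Hxs, Hx, Hconvx, Hus, Hu, HLu, Husc, Haff |- *.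
  pose proof HB as [HBV [HBc _]].
  destruct (inner_ball d B HB) as [rho [Hr Hin]].
  destruct (compact_bounded d B HBc) as [RB [HRB Hbd]].
  assert (Hnorm : forall i, exists m s u', (m <= d)%nat /\ (forall j, (j < m)%nat -> Vec d (s j)) /\ Vec m u' /\ norm m u' = 1 /\
   lincomb s m u' = us i /\
   (forall v, Vec m v -> dot d (lincomb s m v) (xs i) = 0) /\
   (forall w, Vec d w -> dot d w (xs i) = 0 -> exists v, Vec m v /\ w = lincomb s m v) /\
   (forall v, Vec m v -> norm d (lincomb s m v) <= (1 + RB) * norm m v) /\
   (forall v, Vec m v -> cst rho RB * norm m v <= norm d (lincomb s m v)) /\
   (forall v w, Vec m v -> Vec m w -> B (lincomb s m v) -> dot m w u' = dot m v u' ->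
      norm m w = norm m v -> B (lincomb s m w))).
  { intros i. apply (normalize d B (xs i) (Ls i) (us i) rho RB); auto; apply Hus. }
  apply choice3 in Hnorm. destruct Hnorm as [mf [sf [uf Hnf]]].
  set (a := fun (p : nat * nat) (k : nat) => let (j, l) := p in
              if Nat.eqb j (S d) then INR (mf k)
              else if Nat.eqb j d then (if Nat.ltb l (mf k) then uf k l else 0)
              else (if Nat.ltb j (mf k) then sf k j l else 0)).
  set (lst := list_prod (seq 0 (S (S d))) (seq 0 d)).
  destruct (extract_list lst a (1 + RB + INR d)) as [phi [Hphi Hlim]].
  { intros [j l] Hin' k. apply in_prod_iff in Hin'. destruct Hin' as [Hj Hl]. apply in_seq in Hl.
    destruct (Hnf k) as [Hm [Hs [Huv [Hu1 _]]]]. unfold a; cbv beta iota.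
    pose proof (pos_INR d). 
    destruct (Nat.eqb_spec j (S d)). rewrite Rabs_right by (apply Rle_ge, pos_INR). apply le_INR in Hm. lra.
    destruct (Nat.eqb_spec j d). destruct (Nat.ltb_spec l (mf k)).
    pose proof (coord_le_norm (mf k) (uf k) l H0). lra. rewrite Rabs_R0; lra.
    destruct (Nat.ltb_spec j (mf k)); [|rewrite Rabs_R0; lra].
    pose proof (coord_le_norm d (sf k j) l ltac:(lia)).
    destruct (Hnf k) as [_ [_ [_ [_ [_ [_ [_ [Hup _]]]]]]]].
    specialize (Hup (basis j) (Vec_basis _ j H0)). rewrite lincomb_basis, norm_basis in Hup by auto. lra. }
  destruct (Hlim (S d, O)) as [Lm HLm].
  { apply in_prod; apply in_seq; unfold d; lia. }
  destruct (HLm (1/2) ltac:(lra)) as [N HN].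
  assert (Hmconst : forall k, (N <= k)%nat -> mf (phi k) = mf (phi N)).
  { intros k Hk. apply INR_close_eq. pose proof (HN k Hk). pose proof (HN N (le_n N)). simpl in H, H0.
    rewrite Nat.eqb_refl in H, H0.
    replace (INR (mf (phi k)) - INR (mf (phi N))) with ((INR (mf (phi k)) - Lm) - (INR (mf (phi N)) - Lm)) by ring.
    eapply Rle_lt_trans. apply Rabs_triang. rewrite Rabs_Ropp. lra. }
  set (psi := fun k => phi (k + N)%nat).
  set (m := mf (phi N)).
  assert (Hpsi : forall k, mf (psi k) = m) by (intros; apply Hmconst; lia).
  assert (Hpsige : forall k, (k <= psi k)%nat) by (intros; unfold psi; pose proof (incr_ge phi Hphi (k + N)); lia).
  assert (Hlimpsi : forall p, In p lst -> null (fun k => a p (psi k) - limR (fun k => a p (psi k)))).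
  { intros p Hp. apply limR_spec. destruct (Hlim p Hp) as [L0 HL0]. exists L0.
    apply (null_subseq (fun k => a p (phi k) - L0) (fun k => (k + N)%nat)); auto. intros; lia. }
  assert (HmD : (m <= d)%nat) by (destruct (Hnf (phi N)); auto).
  set (sl := fun j l => if Nat.ltb l d then limR (fun k => a (j, l) (psi k)) else 0).
  set (ul := fun l => if Nat.ltb l m then limR (fun k => a (d, l) (psi k)) else 0).
  assert (Hfact : forall k, let i := psi k in
     (forall j, (j < m)%nat -> Vec d (sf i j)) /\ Vec m (uf i) /\ norm m (uf i) = 1 /\
     lincomb (sf i) m (uf i) = us i /\
     (forall v, Vec m v -> dot d (lincomb (sf i) m v) (xs i) = 0) /\
     (forall w, Vec d w -> dot d w (xs i) = 0 -> exists v, Vec m v /\ w = lincomb (sf i) m v) /\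
     (forall v, Vec m v -> norm d (lincomb (sf i) m v) <= (1 + RB) * norm m v) /\
     (forall v, Vec m v -> cst rho RB * norm m v <= norm d (lincomb (sf i) m v)) /\
     (forall v w, Vec m v -> Vec m w -> B (lincomb (sf i) m v) -> dot m w (uf i) = dot m v (uf i) ->
        norm m w = norm m v -> B (lincomb (sf i) m w))).
  { intros k i. rewrite <- (Hpsi k). unfold i. destruct (Hnf (psi k)) as [_ H]. exact H. }
  apply (final_construct d B x L u rho RB m (fun k => sf (psi k)) (fun k => uf (psi k)) (fun k => xs (psi k))
           (fun k => us (psi k)) sl ul).
  - exact HB.
  - exact Hr.
  - exact HRB.
  - exact Hin.
  - exact Hbd.
  - exact Hx.
  - exact Hu.
  - exact HLu.
  - intros; apply Hxs.
  - intros; apply Hfact; auto.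
  - intros; split; apply Hfact.
  - intros; apply Hfact.
  - intros; apply Hfact; auto.
  - intros; apply Hfact; auto.
  - intros; apply Hfact; auto.
  - intros; apply Hfact; auto.
  - intros k v w; apply Hfact.
  - intros j Hj l Hl. unfold sl. destruct (Nat.ltb_spec l d); [lia|auto].
  - intros l Hl. unfold ul. destruct (Nat.ltb_spec l m); [lia|auto].
  - intros j Hj. apply null_le with (a := fun k => norm d (vsub (sf (psi k) j) (sl j))); [|exists O; intros; rewrite Rabs_right by (apply Rle_ge, norm_nonneg); lra].
    apply null_norm_from_coords. intros l Hl. unfold sl. destruct (Nat.ltb_spec l d); [|lia].
    assert (E : forall k, sf (psi k) j l = a (j, l) (psi k)).
    { intros k. unfold a; cbv beta iota. rewrite Hpsi. destruct (Nat.eqb_spec j (S d)); [lia|]. destruct (Nat.eqb_spec j d); [lia|].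
      destruct (Nat.ltb_spec j m); [auto|lia]. }
    apply null_le with (a := fun k => Rabs (a (j, l) (psi k) - limR (fun k => a (j, l) (psi k)))).
    apply null_abs. apply Hlimpsi. apply in_prod; apply in_seq; lia. exists O; intros k _. rewrite E. lra.
  - apply null_norm_from_coords. intros l Hl. unfold ul. destruct (Nat.ltb_spec l m); [|lia].
    assert (E : forall k, uf (psi k) l = a (d, l) (psi k)).
    { intros k. unfold a; cbv beta iota. rewrite Hpsi. destruct (Nat.eqb_spec d (S d)); [lia|]. rewrite Nat.eqb_refl.
      destruct (Nat.ltb_spec l m); [auto|lia]. }
    apply null_le with (a := fun k => Rabs (a (d, l) (psi k) - limR (fun k => a (d, l) (psi k)))).
    apply null_abs. apply Hlimpsi. apply in_prod; apply in_seq; lia. exists O; intros k _. rewrite E. lra.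
  - apply (null_subseq (fun k => norm d (vsub (xs k) x))); auto. apply conv_null; auto.
  - apply (null_subseq (fun k => norm d (vsub (us k) u))); auto. apply conv_null; auto.
Qed.
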